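(* Let $\Phi$ be an irreducible reduced root system with basis $\Delta$, Weyl group $W$ and length function $l$, highest root $\tilde\alpha$. Let $\alpha,\beta$ be long roots. (a) If $x\in W$ satisfies $x(\beta)=\alpha$, then $l(x)\ge|L(\alpha)-L(\beta)|$. (b) There exists $x\in W$ with $x(\beta)=\alpha$ and $l(x)=|L(\alpha)-L(\beta)|$ if and only if $\alpha$ and $\beta$ are linked by a simple path (from $\beta$ to $\alpha$ or from $\alpha$ to $\beta$). In that case such an $x$ is unique; denote it $x_{\alpha\beta}$. When there is a simple path from $\beta$ to $\alpha$, the reduced expressions of $x_{\alpha\beta}$ correspond bijectively to the simple paths from $\beta$ to $\alpha$ (the path $\beta_0\xrightarrow{\gamma_1}\cdots\xrightarrow{\gamma_k}\beta_k$ corresponding to $s_{\gamma_k}\cdots s_{\gamma_1}$). (c) If $\alpha\le\beta\le\gamma$ are long roots such that $x_{\alpha\beta}$ and $x_{\beta\gamma}$ are defined, then $x_{\alpha\gamma}$ is defined, $x_{\alpha\gamma}=x_{\alpha\beta}x_{\beta\gamma}$ and $l(x_{\alpha\gamma})=l(x_{\alpha\beta})+l(x_{\beta\gamma})$. (d) For every positive long root $\alpha$, $x_{-\alpha,\alpha}$ is defined and equals $s_\alpha$. (e) For every long root $\alpha$, $x_{\alpha,\tilde\alpha}$ is defined and equals $x_\alpha$.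
   Context: $(\cdot|\cdot)$ is a $W$-invariant scalar product with minimal squared root length $1$, maximal squared root length $r$; long roots have squared length $r$; $\Delta_{\mathrm{lg}},\Delta_{\mathrm{sh}}$ are long/short simple roots. $y\le x$ means $x-y$ is a non-negative combination of simple roots. For a long root $\gamma=\sum_{\delta\in\Delta}n_\delta\delta$, $\mathrm{ht}^\vee(\gamma)=\sum_{\delta\in\Delta_{\mathrm{lg}}}n_\delta+\frac1r\sum_{\delta\in\Delta_{\mathrm{sh}}}n_\delta$. Level: $L(\gamma)=\mathrm{ht}^\vee(\tilde\alpha)-\mathrm{ht}^\vee(\gamma)$ if $\gamma>0$, $L(\gamma)=\mathrm{ht}^\vee(\tilde\alpha)-\mathrm{ht}^\vee(\gamma)-1$ if $\gamma<0$. For long roots $\beta',\alpha'$ and $\gamma\in\Phi^+$, $\beta'\xrightarrow{\gamma}\alpha'$ means $\alpha'=s_\gamma(\beta')$ and $L(\alpha')=L(\beta')+1$. A simple path from $\beta$ to $\alpha$ is a sequence of long roots $\beta=\beta_0\xrightarrow{\gamma_1}\beta_1\cdots\xrightarrow{\gamma_k}\beta_k=\alpha$ with all $\gamma_i\in\Delta$. $\tilde I=\{\delta\in\Delta:(\tilde\alpha|\delta)=0\}$, $X_{\tilde I}=\{w\in W:w(\Phi^+_{\tilde I})\subset\Phi^+\}$ with $\Phi^+_{\tilde I}$ the positive roots in the span of $\tilde I$, and $x_\alpha$ is the unique element of $X_{\tilde I}$ with $x_\alpha(\tilde\alpha)=\alpha$. *)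

(* Defs.v *)
(* Coordinates: V is identified with R^n via the basis Delta = (delta_1..delta_n),
   i.e. vectors are column vectors 'cV[R]_n of coordinates w.r.t. Delta, and the
   i-th simple root is the i-th unit vector.  The scalar product (.|.) is given
   by its Gram matrix G on Delta. *)
From HB Require Import structures.
From mathcomp Require Import all_boot all_order all_algebra.
From Stdlib Require Import ClassicalEpsilon.
Set Implicit Arguments. Unset Strict Implicit. Unset Printing Implicit Defensive.
Import Order.TTheory GRing.Theory Num.Theory.
Local Open Scope ring_scope.

Section RootSystems.
Variables (R : realFieldType) (n : nat) (G : 'M[R]_n).

Definition form (u v : 'cV[R]_n) : R := (u^T *m G *m v) 0 0.
Definition sqlen (u : 'cV[R]_n) : R := form u u.
(* reflection s_a : v |-> v - 2 (a|v)/(a|a) a, acting on column vectors by x *m v *)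
Definition refl (a : 'cV[R]_n) : 'M[R]_n :=
  1%:M - (2 / sqlen a) *: (a *m a^T *m G).
Definition sroot (i : 'I_n) : 'cV[R]_n := delta_mx i 0.
Definition sref (i : 'I_n) : 'M[R]_n := refl (sroot i).
Definition wordmx (w : seq 'I_n) : 'M[R]_n := foldr (fun i m => sref i *m m) 1%:M w.

Definition has_word_of_length (x : 'M[R]_n) (k : nat) : bool :=
  [exists w : k.-tuple 'I_n, wordmx w == x].
Definition lengthW (x : 'M[R]_n) : nat :=
  match excluded_middle_informative (exists k, has_word_of_length x k) with
  | left h => ex_minn h
  | right _ => 0%N
  end.
Definition reduced_expr (x : 'M[R]_n) (w : seq 'I_n) : Prop :=
  wordmx w = x /\ size w = lengthW x.

Variable Phi : seq 'cV[R]_n.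

Definition is_irr_reduced_root_system_with_basis : Prop :=
  (0 < n)%N /\
  G^T = G /\ (forall v : 'cV[R]_n, v != 0 -> 0 < sqlen v) /\
  (0 : 'cV[R]_n) \notin Phi /\
  (forall a b, a \in Phi -> b \in Phi -> refl a *m b \in Phi) /\
  (forall a b, a \in Phi -> b \in Phi ->
      exists z : int, 2 * form a b / sqlen a = z%:~R) /\
  (forall a (c : R), a \in Phi -> c *: a \in Phi -> c = 1 \/ c = -1) /\
  (forall P : pred 'cV[R]_n,
      (forall a b, a \in Phi -> b \in Phi -> P a -> ~~ P b -> form a b = 0) ->
      (forall a, a \in Phi -> P a) \/ (forall a, a \in Phi -> ~~ P a)) /\
  (forall i, sroot i \in Phi) /\
  (forall a, a \in Phi ->
     (forall i, exists z : int, a i 0 = z%:~R) /\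
     ((forall i, 0 <= a i 0) \/ (forall i, a i 0 <= 0))).

Definition min_sqlen_one : Prop :=
  (forall a, a \in Phi -> 1 <= sqlen a) /\ exists2 a, a \in Phi & sqlen a = 1.

Definition rmax : R := \big[Num.max/0]_(a <- Phi) sqlen a.
Definition longroot (a : 'cV[R]_n) : bool := (a \in Phi) && (sqlen a == rmax).
Definition le_root (y x : 'cV[R]_n) : Prop := forall i, y i 0 <= x i 0.
Definition is_highest_root (ah : 'cV[R]_n) : Prop :=
  ah \in Phi /\ forall b, b \in Phi -> le_root b ah.
Definition posroot (a : 'cV[R]_n) : bool := (a \in Phi) && [forall i, 0 <= a i 0].

Definition htv (g : 'cV[R]_n) : R :=
  \sum_(i < n) (if longroot (sroot i) then g i 0 else g i 0 / rmax).

Variable ah : 'cV[R]_n.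

Definition level (g : 'cV[R]_n) : R :=
  htv ah - htv g - (if posroot g then 0 else 1).

Fixpoint spath (b : 'cV[R]_n) (gs : seq 'I_n) (a : 'cV[R]_n) : Prop :=
  match gs with
  | [::] => longroot b /\ b = a
  | g :: gs' => longroot b /\ level (sref g *m b) = level b + 1 /\
                spath (sref g *m b) gs' a
  end.

Definition inW (x : 'M[R]_n) : Prop :=
  exists s : seq 'cV[R]_n, (forall a, a \in s -> a \in Phi) /\
    x = foldr (fun a m => refl a *m m) 1%:M s.

Definition is_xab (a b : 'cV[R]_n) (x : 'M[R]_n) : Prop :=
  inW x /\ x *m b = a /\ (lengthW x)%:R = `|level a - level b|.

Definition Itilde (i : 'I_n) : bool := form ah (sroot i) == 0.
Definition posroot_I (a : 'cV[R]_n) : bool :=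
  posroot a && [forall i, ~~ Itilde i ==> (a i 0 == 0)].
Definition inX (x : 'M[R]_n) : Prop :=
  inW x /\ forall a, posroot_I a -> posroot (x *m a).

End RootSystems.

(* Main.v *)
From Pilot Require Import Defs.
From HB Require Import structures.
From mathcomp Require Import all_boot all_order all_algebra.
Import Order.TTheory GRing.Theory Num.Theory.
Local Open Scope ring_scope.
From mathcomp Require Import ring lra zify.
From Stdlib Require Import ClassicalEpsilon Classical.
Import Pilot.Defs.
Set Implicit Arguments. Unset Strict Implicit. Unset Printing Implicit Defensive.

Module M.

Lemma count_toggle (T : eqType) (S : seq T) (p q : pred T) x0 :
  uniq S -> x0 \in S -> q x0 -> ~~ p x0 ->
  (forall x, x \in S -> x != x0 -> p x = q x) ->
  count q S = (count p S).+1.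
Proof.
elim: S => [|y S IH] //= /andP [hy hu] hx0 hq hp hall.
case: (eqVneq y x0) => [eyx|nyx].
  subst y; rewrite hq (negbTE hp) /= add0n add1n; congr _.+1.
  apply/esym/eq_in_count => x hx; apply: hall; first by rewrite inE hx orbT.
  by apply: contraNneq hy => <-.
move: hx0; rewrite inE eq_sym (negbTE nyx) /= => hx0.
rewrite (hall y) ?inE ?eqxx // IH // => [|x hx hne]; first by rewrite addnS.
by apply: hall => //; rewrite inE hx orbT.
Qed.

Section Main.
Variables (R : realFieldType) (n : nat) (G : 'M[R]_n) (Phi : seq 'cV[R]_n).
Hypothesis HRS : is_irr_reduced_root_system_with_basis G Phi.

Notation fm := (form G).
Notation sq := (sqlen G).
Notation sr := (@sroot R n).
Notation W := (@wordmx R n G).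
Notation s := (@sref R n G).

Lemma GT : G^T = G. Proof. by case: HRS => _ [h _]. Qed.
Lemma Gpos : forall v : 'cV[R]_n, v != 0 -> 0 < sq v.
Proof. by case: HRS => _ [_ [h _]]. Qed.

Lemma sq_neq0 (v : 'cV[R]_n) : v != 0 -> sq v != 0.
Proof. by move=> h; rewrite gt_eqF // Gpos. Qed.

Lemma formE u v : fm u v = \sum_i u i 0 * (G *m v) i 0.
Proof. by rewrite /form -mulmxA !mxE; apply eq_bigr => i _; rewrite mxE. Qed.

Lemma form_sym (u v : 'cV[R]_n) : fm u v = fm v u.
Proof.
rewrite /form; have -> : (u^T *m G *m v) 0 0 = (u^T *m G *m v)^T 0 0 by rewrite [RHS]mxE.
by rewrite !trmx_mul trmxK GT mulmxA.
Qed.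

Lemma formDl u v w : fm (u + v) w = fm u w + fm v w.
Proof. by rewrite !formE -big_split; apply eq_bigr => i _; rewrite mxE mulrDl. Qed.
Lemma formZl c u w : fm (c *: u) w = c * fm u w.
Proof. by rewrite !formE mulr_sumr; apply eq_bigr => i _; rewrite mxE mulrA. Qed.
Lemma formNl u w : fm (- u) w = - fm u w.
Proof. by rewrite -scaleN1r formZl mulN1r. Qed.
Lemma formBl u v w : fm (u - v) w = fm u w - fm v w.
Proof. by rewrite formDl formNl. Qed.
Lemma formDr u v w : fm w (u + v) = fm w u + fm w v.
Proof. by rewrite ![fm w _]form_sym formDl. Qed.
Lemma formZr c u w : fm w (c *: u) = c * fm w u.
Proof. by rewrite ![fm w _]form_sym formZl. Qed.
Lemma formNr u w : fm w (- u) = - fm w u.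
Proof. by rewrite ![fm w _]form_sym formNl. Qed.
Lemma formBr u v w : fm w (u - v) = fm w u - fm w v.
Proof. by rewrite formDr formNr. Qed.
Lemma form0l w : fm 0 w = 0.
Proof. by rewrite formE big1 // => i _; rewrite mxE mul0r. Qed.
Lemma form0r w : fm w 0 = 0.
Proof. by rewrite form_sym form0l. Qed.

Lemma form_sroot (i : 'I_n) (v : 'cV[R]_n) : fm (sroot R i) v = (G *m v) i 0.
Proof.
rewrite formE (bigD1 i) //= big1 ?addr0; first by rewrite /sroot mxE !eqxx mul1r.
by move=> j /negbTE ji; rewrite /sroot mxE ji mul0r.
Qed.

Lemma sroot_coord (i j : 'I_n) : sroot R i j 0 = (j == i)%:R :> R.
Proof. by rewrite /sroot mxE andbT. Qed.

Lemma reflE (a v : 'cV[R]_n) : refl G a *m v = v - (2 * fm a v / sq a) *: a.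
Proof.
rewrite /refl mulmxBl mul1mx -scalemxAl -!mulmxA.
rewrite [a^T *m (G *m v)]mx11_scalar mul_mx_scalar scalerA.
by rewrite /form mulmxA mulrAC.
Qed.

Lemma refl_self (a : 'cV[R]_n) : sq a != 0 -> refl G a *m a = - a.
Proof.
move=> h; rewrite reflE -/(sq a).
have -> : 2 * sq a / sq a = 2 by field.
by rewrite scaler_nat mulr2n opprD addrA subrr add0r.
Qed.

Lemma refl_isom (a u v : 'cV[R]_n) : sq a != 0 ->
  fm (refl G a *m u) (refl G a *m v) = fm u v.
Proof.
move=> h; rewrite !reflE !formBl !formBr !formZl !formZr -/(sq a).
rewrite [fm u a]form_sym.
by field.
Qed.

Lemma refl_invol (a v : 'cV[R]_n) : sq a != 0 -> refl G a *m (refl G a *m v) = v.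
Proof.
move=> h; rewrite [refl G a *m v]reflE mulmxBr -scalemxAr refl_self //.
rewrite reflE scalerN opprK; by rewrite subrK.
Qed.

Lemma mx_ext (A B : 'M[R]_n) : (forall v : 'cV_n, A *m v = B *m v) -> A = B.
Proof.
move=> h; apply/matrixP => i j; have := h (delta_mx j 0); rewrite -!colE.
by move/(congr1 (fun M : 'cV[R]_n => M i 0)); rewrite !mxE.
Qed.

Lemma refl_mul_invol (a : 'cV[R]_n) : sq a != 0 -> refl G a *m refl G a = 1%:M.
Proof. by move=> h; apply: mx_ext => v; rewrite -mulmxA refl_invol // mul1mx. Qed.

Lemma reflN (a : 'cV[R]_n) : refl G (- a) = refl G a.
Proof.
apply: mx_ext => v; rewrite !reflE /sqlen formNl formNr formNl opprK.
by rewrite scalerN -scaleNr mulrN mulNr opprK.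
Qed.

Definition isom (w : 'M[R]_n) := forall u v, fm (w *m u) (w *m v) = fm u v.

Lemma refl_conj (w : 'M[R]_n) (a : 'cV[R]_n) : isom w -> refl G (w *m a) *m w = w *m refl G a.
Proof.
move=> hw; apply: mx_ext => v; rewrite -!mulmxA !reflE /sqlen hw.
by rewrite mulmxBr -scalemxAr hw.
Qed.



Lemma sroot_neq0 (i : 'I_n) : sr i != 0.
Proof.
apply/eqP => /matrixP /(_ i 0); rewrite /sroot !mxE !eqxx /=.
by move/eqP; rewrite oner_eq0.
Qed.

Lemma sq_sr_neq0 i : sq (sr i) != 0.
Proof. exact: sq_neq0 (sroot_neq0 i). Qed.

Lemma sref_invol i (v : 'cV[R]_n) : sref G i *m (sref G i *m v) = v.
Proof. by rewrite /sref refl_invol // sq_sr_neq0. Qed.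

Lemma sref_isom i : isom (sref G i).
Proof. by move=> u v; rewrite /sref refl_isom // sq_sr_neq0. Qed.

Lemma wordmx_nil : W [::] = 1%:M. Proof. by []. Qed.
Lemma wordmx_cons i ws : W (i :: ws) = sref G i *m W ws. Proof. by []. Qed.
Lemma wordmx_cat ws1 ws2 : W (ws1 ++ ws2) = W ws1 *m W ws2.
Proof. by elim: ws1 => [|i ws IH] /=; rewrite ?mul1mx // IH mulmxA. Qed.
Lemma wordmx_rcons ws i : W (rcons ws i) = W ws *m sref G i.
Proof. by rewrite -cats1 wordmx_cat /= mulmx1. Qed.

Lemma word_isom ws : isom (W ws).
Proof.
elim: ws => [|i ws IH] u v /=; first by rewrite !mul1mx.
by rewrite -!mulmxA sref_isom IH.
Qed.

Lemma word_inv ws (v : 'cV[R]_n) : W (rev ws) *m (W ws *m v) = v.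
Proof.
elim: ws v => [|i ws IH] v /=; first by rewrite !mul1mx.
by rewrite rev_cons wordmx_rcons -!mulmxA sref_invol IH.
Qed.

Lemma word_inv' ws (v : 'cV[R]_n) : W ws *m (W (rev ws) *m v) = v.
Proof. by rewrite -{1}(revK ws) word_inv. Qed.

Lemma word_invmx ws : W (rev ws) *m W ws = 1%:M.
Proof. by apply: mx_ext => v; rewrite -mulmxA word_inv mul1mx. Qed.
Lemma word_invmx' ws : W ws *m W (rev ws) = 1%:M.
Proof. by apply: mx_ext => v; rewrite -mulmxA word_inv' mul1mx. Qed.

Lemma word_inv_uniq ws1 ws2 : W ws1 = W ws2 -> W (rev ws1) = W (rev ws2).
Proof.
move=> h; apply: mx_ext => v.
by rewrite -{1}[v](word_inv' ws2) -h word_inv.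
Qed.

Lemma mx_inj_word ws (u v : 'cV[R]_n) : W ws *m u = W ws *m v -> u = v.
Proof. by move=> h; rewrite -(word_inv ws u) h word_inv. Qed.

Lemma hwolP (x : 'M[R]_n) k :
  reflect (exists ws, size ws = k /\ W ws = x) (has_word_of_length G x k).
Proof.
apply: (iffP existsP) => [[w /eqP hw]|[ws [hs hw]]].
  by exists (tval w); rewrite size_tuple.
have hs' : size ws == k by rewrite hs.
by exists (Tuple hs'); rewrite /= hw.
Qed.

Lemma lengthW_le ws : (lengthW G (W ws) <= size ws)%N.
Proof.
rewrite /lengthW; case: excluded_middle_informative => [h|h].
  case: ex_minnP => m _ hm; apply: hm; apply/hwolP; by exists ws.
exfalso; apply: h; exists (size ws); apply/hwolP; by exists ws.
Qed.

Lemma lengthW_spec ws : exists ws', W ws' = W ws /\ size ws' = lengthW G (W ws).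
Proof.
rewrite /lengthW; case: excluded_middle_informative => [h|h].
  case: ex_minnP => m /hwolP [ws' [h1 h2]] _; by exists ws'.
exfalso; apply: h; exists (size ws); apply/hwolP; by exists ws.
Qed.

Lemma lengthW_eq ws1 ws2 : W ws1 = W ws2 -> lengthW G (W ws1) = lengthW G (W ws2).
Proof. by move=> ->. Qed.

Lemma lengthW_rev ws : lengthW G (W (rev ws)) = lengthW G (W ws).
Proof.
have key : forall ws, (lengthW G (W (rev ws)) <= lengthW G (W ws))%N.
  move=> ws0; have [ws' [h1 h2]] := lengthW_spec ws0.
  rewrite -(word_inv_uniq h1) -h2 -(size_rev ws'); exact: lengthW_le.
apply/eqP; rewrite eqn_leq key /=.
by have := key (rev ws); rewrite revK.
Qed.

Lemma lengthW_cat ws1 ws2 :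
  (lengthW G (W ws1 *m W ws2) <= lengthW G (W ws1) + lengthW G (W ws2))%N.
Proof.
have [w1 [h1 e1]] := lengthW_spec ws1; have [w2 [h2 e2]] := lengthW_spec ws2.
by rewrite -e1 -e2 -h1 -h2 -wordmx_cat -size_cat lengthW_le.
Qed.

Lemma lengthW0 ws : lengthW G (W ws) = 0%N -> W ws = 1%:M.
Proof.
move=> h; have [ws' [h1 h2]] := lengthW_spec ws.
by move: h2; rewrite h; case: ws' h1 => // <-.
Qed.

Lemma Phi0 : (0 : 'cV[R]_n) \notin Phi.
Proof. by case: HRS => _ [_ [_ [h _]]]. Qed.
Lemma Phi_refl a b : a \in Phi -> b \in Phi -> refl G a *m b \in Phi.
Proof. by case: HRS => _ [_ [_ [_ [h _]]]]; apply: h. Qed.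
Lemma Phi_cartan a b : a \in Phi -> b \in Phi ->
      exists z : int, 2 * fm a b / sq a = z%:~R.
Proof. by case: HRS => _ [_ [_ [_ [_ [h _]]]]]; apply: h. Qed.
Lemma Phi_red a (c : R) : a \in Phi -> c *: a \in Phi -> c = 1 \/ c = -1.
Proof. by case: HRS => _ [_ [_ [_ [_ [_ [h _]]]]]]; apply: h. Qed.
Lemma Phi_irr (P : pred 'cV[R]_n) :
  (forall a b, a \in Phi -> b \in Phi -> P a -> ~~ P b -> fm a b = 0) ->
  (forall a, a \in Phi -> P a) \/ (forall a, a \in Phi -> ~~ P a).
Proof. by case: HRS => _ [_ [_ [_ [_ [_ [_ [h _]]]]]]]; apply: h. Qed.
Lemma sroot_Phi i : sr i \in Phi.
Proof. by case: HRS => _ [_ [_ [_ [_ [_ [_ [_ [h _]]]]]]]]; apply: h. Qed.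
Lemma Phi_int a i : a \in Phi -> exists z : int, a i 0 = z%:~R.
Proof. by case: HRS => _ [_ [_ [_ [_ [_ [_ [_ [_ h]]]]]]]] /h [h1 _]. Qed.
Lemma Phi_sgn a : a \in Phi -> (forall i, 0 <= a i 0) \/ (forall i, a i 0 <= 0).
Proof. by case: HRS => _ [_ [_ [_ [_ [_ [_ [_ [_ h]]]]]]]] /h [_ h2]. Qed.

Lemma Phi_neq0 a : a \in Phi -> a != 0.
Proof. by apply: contraTneq => ->; exact: Phi0. Qed.
Lemma sq_root_pos a : a \in Phi -> 0 < sq a.
Proof. by move/Phi_neq0; apply: Gpos. Qed.
Lemma sq_root_neq0 a : a \in Phi -> sq a != 0.
Proof. by move/sq_root_pos/gt_eqF ->. Qed.

Lemma Phi_opp a : a \in Phi -> - a \in Phi.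
Proof. by move=> h; rewrite -(@refl_self a) ?sq_root_neq0 //; apply: Phi_refl. Qed.

Lemma sref_Phi i a : a \in Phi -> s i *m a \in Phi.
Proof. by move=> h; apply: Phi_refl => //; apply: sroot_Phi. Qed.

Lemma word_Phi ws a : a \in Phi -> W ws *m a \in Phi.
Proof.
elim: ws => [|i ws IH] /= h; first by rewrite mul1mx.
by rewrite -mulmxA sref_Phi // IH.
Qed.

Lemma word_sq ws a : sq (W ws *m a) = sq a.
Proof. by rewrite /sqlen word_isom // ?GT ?Gpos //; apply: Gpos. Qed.

Lemma word_form ws a b : fm (W ws *m a) (W ws *m b) = fm a b.
Proof. by rewrite word_isom // ?GT //; apply: Gpos. Qed.

Definition negroot (a : 'cV[R]_n) := (a \in Phi) && [forall i, a i 0 <= 0].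

Lemma posrootP a : reflect (a \in Phi /\ forall i, 0 <= a i 0) (posroot Phi a).
Proof. by apply: (iffP andP) => -[h1 h2]; split => //; [apply/forallP | apply/forallP]. Qed.
Lemma negrootP a : reflect (a \in Phi /\ forall i, a i 0 <= 0) (negroot a).
Proof. by apply: (iffP andP) => -[h1 h2]; split => //; [apply/forallP | apply/forallP]. Qed.

Lemma root_pos_or_neg a : a \in Phi -> posroot Phi a \/ negroot a.
Proof.
move=> h; case: (Phi_sgn h) => h2; [left; apply/posrootP|right; apply/negrootP]; by [].
Qed.

Lemma nonzero_coord (a : 'cV[R]_n) : a != 0 -> exists i, a i 0 != 0.
Proof.
move=> h; apply/existsP; apply: contraR h => /existsPn h; apply/eqP/matrixP => i j.
by rewrite (ord1 j) mxE; move: (h i); rewrite negbK => /eqP.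
Qed.

Lemma pos_not_neg a : posroot Phi a -> ~~ negroot a.
Proof.
move=> /posrootP [h1 h2]; apply/negP => /negrootP [_ h3].
have [i hi] := nonzero_coord (Phi_neq0 h1).
by move: hi; rewrite eq_le h3 h2.
Qed.

Lemma posroot_opp a : posroot Phi (- a) = negroot a.
Proof.
apply/posrootP/negrootP => -[h1 h2]; split.
- by rewrite -[a]opprK Phi_opp.
- by move=> i; move: (h2 i); rewrite mxE oppr_ge0.
- by rewrite Phi_opp.
- by move=> i; rewrite mxE oppr_ge0.
Qed.

Lemma negroot_opp a : negroot (- a) = posroot Phi a.
Proof. by rewrite -posroot_opp opprK. Qed.

Lemma root_sign_excl a : a \in Phi -> negroot a = ~~ posroot Phi a.
Proof.
move=> h; case: (root_pos_or_neg h) => hp.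
- by rewrite hp (negbTE (pos_not_neg hp)).
- by rewrite hp (contraL (@pos_not_neg a) hp).
Qed.

Lemma srefE i (v : 'cV[R]_n) : s i *m v = v - (2 * fm (sr i) v / sq (sr i)) *: sr i.
Proof. by rewrite /sref reflE // GT. Qed.

Lemma sref_coord i (v : 'cV[R]_n) j :
  (s i *m v) j 0 = v j 0 - (if j == i then 2 * fm (sr i) v / sq (sr i) else 0).
Proof.
rewrite srefE !mxE andbT; case: eqP => _; by rewrite ?mulr1 ?mulr0.
Qed.

Lemma sref_opp i (v : 'cV[R]_n) : s i *m (- v) = - (s i *m v).
Proof. by rewrite mulmxN. Qed.

Lemma sroot_pos i : posroot Phi (sr i).
Proof. by apply/posrootP; split; [apply: sroot_Phi | move=> j; rewrite sroot_coord ler0n]. Qed.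

Lemma sref_sroot i : s i *m sr i = - sr i.
Proof. by rewrite /sref refl_self // sq_root_neq0 // sroot_Phi. Qed.

Lemma sref_pos i a : posroot Phi a -> a != sr i -> posroot Phi (s i *m a).
Proof.
move=> ha hne; have /posrootP [hP hc] := ha.
have /existsP [j /andP [hji hj]] : [exists j, (j != i) && (a j 0 != 0)].
  apply: contraR hne => /existsPn hall.
  have ha_eq : a = a i 0 *: sr i.
    apply/matrixP => j k; rewrite (ord1 k) !mxE ?eqxx ?andbT.
    case: (eqVneq j i) => [->|hji]; first by rewrite mulr1.
    by move: (hall j); rewrite negb_and hji negbK /= => /eqP ->; rewrite mulr0.
  have := @Phi_red (sr i) (a i 0) (sroot_Phi i); rewrite -ha_eq => /(_ hP) [] h1.
    by rewrite ha_eq h1 scale1r.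
  by move: (hc i); rewrite h1 oppr_ge0 ler10.
have hPs := sref_Phi i hP.
case: (root_pos_or_neg hPs) => // /negrootP [_ hneg].
have := hneg j; rewrite sref_coord (negbTE hji) subr0.
have := hc j; by rewrite le_eqVlt eq_sym (negbTE hj) /= => /lt_geF ->.
Qed.

Lemma sref_neg i a : negroot a -> a != - sr i -> negroot (s i *m a).
Proof.
move=> ha hne; rewrite -posroot_opp -sref_opp; apply: sref_pos.
  by rewrite posroot_opp.
by apply: contra hne => /eqP <-; rewrite opprK.
Qed.


Notation pos := (posroot Phi).
Notation neg := (negroot).

Definition inv (x : 'M[R]_n) (g : 'cV[R]_n) := pos g && neg (x *m g).
Definition ninv (x : 'M[R]_n) := count (inv x) (undup Phi).

Lemma ninv1 : ninv 1%:M = 0%N.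
Proof.
rewrite /ninv; apply/eqP; rewrite -leqn0 leqNgt -has_count; apply/hasPn => g _.
rewrite /inv mul1mx; apply/negP => /andP [/pos_not_neg h1 h2].
by rewrite h2 in h1.
Qed.

Lemma word_pos_or_neg ws a : a \in Phi -> pos (W ws *m a) \/ neg (W ws *m a).
Proof. by move=> h; apply: root_pos_or_neg => //; apply: word_Phi. Qed.

Lemma toggle_up ws i : pos (W (rev ws) *m sr i) ->
  ninv (W (i :: ws)) = (ninv (W ws)).+1.
Proof.
move=> h0; set g0 := W (rev ws) *m sr i.
rewrite /ninv (@count_toggle _ _ (inv (W ws)) _ g0) ?undup_uniq //.
- by rewrite mem_undup; case/posrootP: h0.
- by rewrite /inv h0 /g0 wordmx_cons -mulmxA word_inv' // sref_sroot // negroot_opp // sroot_pos.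
- by rewrite /inv h0 /g0 word_inv' // (negbTE (pos_not_neg (sroot_pos i))).
move=> g; rewrite mem_undup => hg hne; rewrite /inv.
case hpg: (pos g) => //=.
have hwg : W ws *m g \in Phi by apply: word_Phi.
have ne1 : W ws *m g != sr i.
  apply: contra hne => /eqP h; apply/eqP.
  by rewrite /g0 -h word_inv.
have ne2 : W ws *m g != - sr i.
  apply/eqP => h; have : neg g.
    by rewrite -(word_inv ws g) h mulmxN -posroot_opp // opprK; exact: h0.
  by rewrite root_sign_excl ?hpg //; case/posrootP: hpg.
rewrite -mulmxA /=.
case: (root_pos_or_neg hwg) => hh.
  rewrite (root_sign_excl hwg) hh root_sign_excl ?sref_Phi //.
  by rewrite sref_pos.
by rewrite hh sref_neg.
Qed.

Lemma toggle_down ws i : neg (W (rev ws) *m sr i) ->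
  ninv (W ws) = (ninv (W (i :: ws))).+1.
Proof.
move=> h0.
have -> : W ws = W (i :: i :: ws).
  by apply: mx_ext => v; rewrite /= -!mulmxA sref_invol.
apply: toggle_up; rewrite rev_cons wordmx_rcons -mulmxA sref_sroot // mulmxN.
by rewrite posroot_opp.
Qed.

Lemma ninv_le ws : (ninv (W ws) <= size ws)%N.
Proof.
elim: ws => [|i ws IH] /=; first by rewrite ninv1.
have hr : W (rev ws) *m sr i \in Phi by apply: word_Phi => //; apply: sroot_Phi.
case: (root_pos_or_neg hr) => h.
  by have := toggle_up h; rewrite /= => ->.
have := toggle_down h; rewrite /= => e; lia.
Qed.

Lemma exchange ws mu : pos mu -> neg (W (rev ws) *m mu) ->
  exists ws', (size ws').+1 = size ws /\ refl G mu *m W ws = W ws'.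
Proof.
elim: ws mu => [|j ws IH] mu hmu /=.
  by rewrite mul1mx => /(contraL (@pos_not_neg mu)); rewrite hmu.
rewrite rev_cons wordmx_rcons -mulmxA => hneg.
case: (eqVneq mu (sr j)) => [->|hne].
  by exists ws; split => //; rewrite mulmxA /sref refl_mul_invol ?mul1mx // (sq_root_neq0 (sroot_Phi j)).
have hp' := sref_pos hmu hne.
have [ws' [hs he]] := IH _ hp' hneg.
exists (j :: ws'); split; first by rewrite /= hs.
have hmueq : mu = s j *m (s j *m mu) by rewrite sref_invol.
have hc : refl G mu *m s j = s j *m refl G (s j *m mu).
  rewrite {1}hmueq refl_conj //; exact: sref_isom.
by rewrite /= mulmxA hc -mulmxA he.
Qed.

Lemma word_short ws : exists ws', W ws' = W ws /\ size ws' = ninv (W ws).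
Proof.
elim: ws => [|i ws [ws' [he hs]]]; first by exists [::]; rewrite ninv1.
have hr : W (rev ws') *m sr i \in Phi by apply: word_Phi => //; apply: sroot_Phi.
case: (root_pos_or_neg hr) => h.
  exists (i :: ws'); split; first by rewrite /= he.
  by have := toggle_up h; rewrite /= he hs => ->.
have [ws'' [hs' he']] := exchange (sroot_pos i) h.
exists ws''; split; first by rewrite -he' /= he.
have := toggle_down h; rewrite /= he => e; move: hs'; rewrite hs e; lia.
Qed.

Lemma lengthW_ninv ws : lengthW G (W ws) = ninv (W ws).
Proof.
apply/eqP; rewrite eqn_leq; apply/andP; split.
  by have [ws' [<- <-]] := word_short ws; apply: lengthW_le.
have [ws' [h1 h2]] := lengthW_spec ws.
by rewrite -h2 -h1 ninv_le.
Qed.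

End Main.
End M.
Import M.

Module M2.
Lemma sq_small (z : int) : (z * z < 4)%R -> (z != 0)%R -> (z * z = 1)%R.
Proof.
move=> h4 h0.
have hb1 : (z <= 1)%R.
  rewrite leNgt; apply/negP => h.
  have : (2 * 2 <= z * z)%R by apply: ler_pM => //; lia.
  lia.
have hb2 : (-1 <= z)%R.
  rewrite leNgt; apply/negP => h.
  have : (2 * 2 <= (- z) * (- z))%R by apply: ler_pM => //; lia.
  rewrite mulrNN; lia.
have : (z = 1 \/ z = -1)%R by lia.
by case=> ->.
Qed.

Lemma small_int (z : int) : (z * z < 4)%R -> z = -1 \/ z = 0 \/ z = 1.
Proof.
move=> h4.
have hb1 : (z <= 1)%R.
  rewrite leNgt; apply/negP => h.
  have : (2 * 2 <= z * z)%R by apply: ler_pM => //; lia.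
  lia.
have hb2 : (-1 <= z)%R.
  rewrite leNgt; apply/negP => h.
  have : (2 * 2 <= (- z) * (- z))%R by apply: ler_pM => //; lia.
  rewrite mulrNN; lia.
lia.
Qed.

Lemma int_facts (zp zq : int) : (zq * zq <= zp * zq)%R -> (zp * zq < 4)%R -> (0 < zp * zq)%R ->
  (zq * zq = 1)%R /\ (zp * zq = 1 \/ zp * zq = 2 \/ zp * zq = 3)%R.
Proof.
move=> iq ip ig; split.
  apply: sq_small; first by lia.
  by apply/eqP => e0; move: ig; rewrite e0 mulr0 ltxx.
move: ip ig; set m := (zp * zq)%R; lia.
Qed.

Section Main2.
Variables (R : realFieldType) (n : nat) (G : 'M[R]_n) (Phi : seq 'cV[R]_n).
Hypothesis HRS : is_irr_reduced_root_system_with_basis G Phi.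
Hypothesis Hmin : min_sqlen_one G Phi.
Let GT := GT HRS.
Let Gpos := Gpos HRS.
Let sq_neq0 := sq_neq0 HRS.
Let form_sym := form_sym HRS.
Let formDr := formDr HRS.
Let formZr := formZr HRS.
Let formNr := formNr HRS.
Let formBr := formBr HRS.
Let form0r := form0r HRS.
Let refl_isom := refl_isom HRS.
Let reflN := reflN HRS.
Let sq_sr_neq0 := sq_sr_neq0 HRS.
Let sref_invol := sref_invol HRS.
Let sref_isom := sref_isom HRS.
Let word_isom := word_isom HRS.
Let word_inv := word_inv HRS.
Let word_inv' := word_inv' HRS.
Let word_invmx := word_invmx HRS.
Let word_invmx' := word_invmx' HRS.
Let word_inv_uniq := word_inv_uniq HRS.
Let mx_inj_word := mx_inj_word HRS.
Let lengthW_rev := lengthW_rev HRS.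
Let Phi0 := Phi0 HRS.
Let Phi_refl := Phi_refl HRS.
Let Phi_cartan := Phi_cartan HRS.
Let Phi_red := Phi_red HRS.
Let Phi_irr := Phi_irr HRS.
Let sroot_Phi := sroot_Phi HRS.
Let Phi_int := Phi_int HRS.
Let Phi_sgn := Phi_sgn HRS.
Let Phi_neq0 := Phi_neq0 HRS.
Let sq_root_pos := sq_root_pos HRS.
Let sq_root_neq0 := sq_root_neq0 HRS.
Let Phi_opp := Phi_opp HRS.
Let sref_Phi := sref_Phi HRS.
Let word_Phi := word_Phi HRS.
Let word_sq := word_sq HRS.
Let word_form := word_form HRS.
Let root_pos_or_neg := root_pos_or_neg HRS.
Let pos_not_neg := pos_not_neg HRS.
Let posroot_opp := posroot_opp HRS.
Let negroot_opp := negroot_opp HRS.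
Let root_sign_excl := root_sign_excl HRS.
Let sroot_pos := sroot_pos HRS.
Let sref_sroot := sref_sroot HRS.
Let sref_pos := sref_pos HRS.
Let sref_neg := sref_neg HRS.
Let ninv1 := ninv1 HRS.
Let word_pos_or_neg := word_pos_or_neg HRS.
Let toggle_up := toggle_up HRS.
Let toggle_down := toggle_down HRS.
Let ninv_le := ninv_le HRS.
Let exchange := exchange HRS.
Let word_short := word_short HRS.
Let lengthW_ninv := lengthW_ninv HRS.
Let formE := formE G.
Let formDl := formDl G.
Let formZl := formZl G.
Let formNl := formNl G.
Let formBl := formBl G.
Let form0l := form0l G.
Let form_sroot := form_sroot G.
Let reflE := reflE G.
Let srefE := srefE G.
Let sref_coord := sref_coord G.
Let sref_opp := sref_opp G.
Let wordmx_cons := wordmx_cons G.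
Let wordmx_cat := wordmx_cat G.
Let wordmx_rcons := wordmx_rcons G.
Let wordmx_nil := wordmx_nil G.
Let lengthW_le := lengthW_le G.
Let lengthW_spec := lengthW_spec G.
Let lengthW_cat := lengthW_cat G.
Let posrootP := posrootP Phi.
Let negrootP := negrootP Phi.
Let sroot_neq0 := sroot_neq0 R.
Let sroot_coord := sroot_coord R.
Let hwolP := hwolP G.
Notation fm := (form G).
Notation sq := (sqlen G).
Notation sr := (@sroot R n).
Notation W := (@wordmx R n G).
Notation s := (@sref R n G).
Notation pos := (posroot Phi).
Notation neg := (negroot Phi).

Lemma sq_ge0 w : 0 <= sq w.
Proof. by case: (eqVneq w 0) => [->|h]; [rewrite /sqlen form0l | apply/ltW/Gpos]. Qed.

Lemma sq_expand (u v : 'cV[R]_n) t : sq (v - t *: u) = sq v - 2 * t * fm u v + t ^+ 2 * sq u.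
Proof.
rewrite /sqlen formBl !formBr !formZl !formZr [fm v u]form_sym; ring.
Qed.

Lemma cs u v : fm u v ^+ 2 <= sq u * sq v.
Proof.
case: (eqVneq u 0) => [->|hu]; first by rewrite form0l /sqlen form0l expr0n mul0r.
have hp := Gpos hu; have := sq_ge0 (v - (fm u v / sq u) *: u).
rewrite sq_expand => h.
have : 0 <= sq u * (sq v - 2 * (fm u v / sq u) * fm u v + (fm u v / sq u) ^+ 2 * sq u).
  by apply: mulr_ge0 => //; apply: ltW.
have -> : sq u * (sq v - 2 * (fm u v / sq u) * fm u v + (fm u v / sq u) ^+ 2 * sq u)
   = sq u * sq v - fm u v ^+ 2 by field; rewrite gt_eqF.
by rewrite subr_ge0.
Qed.

Lemma cs_eq u v : u != 0 -> fm u v ^+ 2 = sq u * sq v -> v = (fm u v / sq u) *: u.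
Proof.
move=> hu he; have hp := Gpos hu.
apply/eqP; rewrite -subr_eq0; apply/negPn/negP => hne.
have := Gpos hne; rewrite sq_expand.
have -> : sq v - 2 * (fm u v / sq u) * fm u v + (fm u v / sq u) ^+ 2 * sq u
   = (sq u * sq v - fm u v ^+ 2) / sq u by field; rewrite gt_eqF.
by rewrite he subrr mul0r ltxx.
Qed.

Lemma cs_roots a b : a \in Phi -> b \in Phi -> fm a b ^+ 2 = sq a * sq b ->
  b = a \/ b = - a.
Proof.
move=> ha hb he; have e := cs_eq (Phi_neq0 ha) he.
have := @Phi_red a (fm a b / sq a) ha; rewrite -e => /(_ hb) [] h; move: e; rewrite h => ->.
  by left; rewrite scale1r.
by right; rewrite scaleN1r.
Qed.

Lemma cs_roots_lt a b : a \in Phi -> b \in Phi -> b != a -> b != - a ->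
  fm a b ^+ 2 < sq a * sq b.
Proof.
move=> ha hb h1 h2; rewrite lt_neqAle cs andbT; apply/negP => /eqP e.
by case: (cs_roots ha hb e) => /eqP; rewrite ?(negbTE h1) ?(negbTE h2).
Qed.

Lemma cartan a b : a \in Phi -> b \in Phi -> exists z : int, 2 * fm a b / sq a = z%:~R.
Proof. exact: Phi_cartan. Qed.

Notation rm := (rmax G Phi).

Lemma le_rmax a : a \in Phi -> sq a <= rm.
Proof. by move=> h; rewrite /rmax; apply: (le_bigmax_seq _ _ xpredT). Qed.

Lemma bigmax_attained (l : seq 'cV[R]_n) :
  (\big[Num.max/0]_(a <- l) sq a = 0) \/
  exists2 a, a \in l & \big[Num.max/0]_(a <- l) sq a = sq a.
Proof.
elim: l => [|x l IH]; first by left; rewrite big_nil.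
rewrite big_cons; case: (leP (\big[Num.max/0]_(a <- l) sq a) (sq x)) => h.
  by right; exists x; rewrite ?inE ?eqxx //.
right; case: IH => [e|[a ha e]].
  by move: h; rewrite e => /lt_le_trans /(_ (sq_ge0 x)); rewrite ltxx.
by exists a => //; rewrite inE ha orbT.
Qed.

Lemma n_gt0 : (0 < n)%N. Proof. by case: HRS. Qed.

Lemma rmax_attained : exists2 a, a \in Phi & sq a = rm.
Proof.
case: (bigmax_attained Phi) => [e|[a ha e]]; last by exists a.
have h0 : sr (Ordinal n_gt0) \in Phi by apply: sroot_Phi.
have := le_rmax h0; rewrite /rmax e => h; have := sq_root_pos h0.
by rewrite ltNge h.
Qed.

Lemma rmax_pos : 0 < rm.
Proof. by case: rmax_attained => a ha <-; apply: sq_root_pos. Qed.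

Lemma rmax_ge1 : 1 <= rm.
Proof. case: Hmin => _ [a ha e]; by rewrite -e le_rmax. Qed.

Lemma longrootP a : reflect (a \in Phi /\ sq a = rm) (longroot G Phi a).
Proof. by apply: (iffP andP) => -[h1 /eqP h2]; split. Qed.

Lemma sq_ge1 a : a \in Phi -> 1 <= sq a.
Proof. by case: Hmin => h _ /h. Qed.

Definition isint (x : R) := exists z : int, x = z%:~R.

Lemma isint_sum (F : 'I_n -> R) : (forall i, isint (F i)) -> isint (\sum_i F i).
Proof.
move=> h; apply: (big_ind isint); first by exists 0.
  by move=> x y [zx ->] [zy ->]; exists (zx + zy); rewrite intrD.
by move=> i _; apply: h.
Qed.

Definition csum (v : 'cV[R]_n) := \sum_i v i 0.

Lemma csum_int a : a \in Phi -> isint (csum a).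
Proof. by move=> h; apply: isint_sum => i; apply: Phi_int. Qed.

Lemma csum_pos a : pos a -> 0 < csum a.
Proof.
case/posrootP => ha hc; have [i hi] := nonzero_coord (Phi_neq0 ha).
rewrite /csum (bigD1 i) //=.
have h1 : 0 < a i 0 by rewrite lt_neqAle eq_sym hi hc.
have h2 : 0 <= \sum_(j < n | j != i) a j 0 by apply: sumr_ge0 => j _.
lra.
Qed.

Lemma csum_sref i v : csum (s i *m v) = csum v - 2 * fm (sr i) v / sq (sr i).
Proof.
rewrite /csum (eq_bigr _ (fun j _ => sref_coord i v j)) sumrB; congr (_ - _).
by rewrite (bigD1 i) //= eqxx big1 ?addr0 // => j /negbTE ->.
Qed.

Lemma form_sum_coord u v : fm u v = \sum_i u i 0 * fm (sr i) v.
Proof. by rewrite formE; apply: eq_bigr => i _; rewrite form_sroot. Qed.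

Lemma exists_pos_form a : pos a -> exists i, 0 < fm (sr i) a.
Proof.
case/posrootP => ha hc; apply/existsP; apply: contraT => /existsPn h.
have : sq a <= 0.
  rewrite /sqlen form_sum_coord -oppr_ge0 -sumrN; apply: sumr_ge0 => i _.
  by rewrite oppr_ge0 mulr_ge0_le0 // leNgt (h i).
by rewrite leNgt sq_root_pos.
Qed.

Lemma int_ge1 (x : R) : isint x -> 0 < x -> 1 <= x.
Proof. by case=> z ->; rewrite ltr0z ler1z. Qed.

Lemma pos_descent_N (N : nat) a : pos a -> csum a <= N%:R ->
  exists ws j, a = W ws *m sr j.
Proof.
elim: N a => [|N IH] a ha hN.
  by have := csum_pos ha; rewrite ltNge hN.
case: (boolP [exists j, a == sr j]) => [/existsP [j /eqP ->]|hnj].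
  by exists [::], j; rewrite mul1mx.
have [i hi] := exists_pos_form ha.
have hne : a != sr i by apply: contra hnj => /eqP ->; apply/existsP; exists i.
have hp := sref_pos ha hne.
have hc : 1 <= 2 * fm (sr i) a / sq (sr i).
  apply: int_ge1; first by apply: cartan; [apply: sroot_Phi | case/posrootP: ha].
  by rewrite mulr_gt0 ?invr_gt0 ?sq_root_pos ?sroot_Phi // mulr_gt0.
have [ws [j e]] : exists ws j, s i *m a = W ws *m sr j.
  by apply: IH => //; rewrite csum_sref; move: hN; rewrite -natr1; lra.
by exists (i :: ws), j; rewrite /= -mulmxA -e sref_invol.
Qed.

Lemma pos_descent a : pos a -> exists ws j, a = W ws *m sr j.
Proof.
move=> ha; have [z ez] := csum_int (proj1 (posrootP _ ha)).
have zp : (0 <= z)%R by rewrite -(ler0z R) -ez ltW // csum_pos.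
apply: (@pos_descent_N `|z|%N) => //.
by rewrite ez -[z in z%:~R]gez0_abs.
Qed.

Lemma refl_word a : a \in Phi -> exists ws, refl G a = W ws.
Proof.
have key : forall a, pos a -> exists ws, refl G a = W ws.
  move=> b hb; have [ws [j ->]] := pos_descent hb.
  exists (ws ++ j :: rev ws); rewrite wordmx_cat wordmx_cons.
  apply: mx_ext => v.
  rewrite -[v in LHS](word_inv' ws v) mulmxA refl_conj; last exact: word_isom.
  by rewrite /sref !mulmxA.
move=> ha; case: (root_pos_or_neg ha) => h; first exact: key.
by rewrite -reflN; apply: key; rewrite posroot_opp.
Qed.

Lemma inW_word x : inW G Phi x -> exists ws, x = W ws.
Proof.
case=> l [hl ->]; elim: l hl => [|a l IH] hl /=; first by exists [::].
have [ws1 e1] := refl_word (hl a (mem_head _ _)).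
have [ws2 e2] := IH (fun b hb => hl b (@mem_behead _ (a :: l) _ hb)).
by exists (ws1 ++ ws2); rewrite wordmx_cat e1 e2.
Qed.

Lemma word_inW ws : inW G Phi (W ws).
Proof.
exists (map sr ws); split.
  by move=> a /mapP [i _ ->]; apply: sroot_Phi.
by elim: ws => [|i ws IH] //=; rewrite IH.
Qed.

Definition inspan (O : 'cV[R]_n -> Prop) (v : 'cV[R]_n) :=
  exists l : seq (R * 'cV[R]_n), (forall p, p \in l -> O p.2) /\
     v = \sum_(p <- l) p.1 *: p.2.

Lemma form_span_l (l : seq (R * 'cV[R]_n)) b :
  fm (\sum_(p <- l) p.1 *: p.2) b = \sum_(p <- l) p.1 * fm p.2 b.
Proof.
elim: l => [|p l IH]; first by rewrite !big_nil form0l.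
by rewrite !big_cons formDl formZl IH.
Qed.

Lemma orbit_nonorth a b : a \in Phi -> b \in Phi ->
  exists ws, fm (W ws *m a) b != 0.
Proof.
move=> ha hb.
pose O := fun v => exists ws, v = W ws *m a.
pose P := fun v : 'cV[R]_n => if excluded_middle_informative (inspan O v) then true else false.
have PP : forall v, P v <-> inspan O v.
  by move=> v; rewrite /P; case: excluded_middle_informative.
have claim1 : forall g, g \in Phi -> ~ inspan O g -> forall ws, fm g (W ws *m a) = 0.
  move=> g hg hns ws; set o := W ws *m a.
  have [ws' e'] := refl_word hg.
  have ho' : O (refl G g *m o) by exists (ws' ++ ws); rewrite e' /o wordmx_cat mulmxA.
  have hq := sq_root_neq0 hg.
  case: (eqVneq (2 * fm g o / sq g) 0) => [e0|hk].
    move/eqP: e0; rewrite !mulf_eq0 invr_eq0 (negbTE hq) orbF => /orP [|/eqP //].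
    by rewrite pnatr_eq0.
  exfalso; apply: hns.
  exists [:: ((2 * fm g o / sq g)^-1, o); (- (2 * fm g o / sq g)^-1, refl G g *m o)].
  split.
    by move=> p; rewrite !inE => /orP [] /eqP -> //=; exists ws.
  by rewrite !big_cons big_nil addr0 /= reflE scalerBr scalerA mulNr mulVf // scaleN1r opprK scaleNr addrA addrN add0r.
have claim2 : forall x y, x \in Phi -> y \in Phi -> P x -> ~~ P y -> fm x y = 0.
  move=> x y hx hy /PP [l [hl ->]] hny; rewrite form_span_l big_seq big1 // => p hp.
  have [ws ->] := hl p hp; rewrite form_sym claim1 ?mulr0 //.
  by move=> hs; move: hny; rewrite (iffRL (PP y) hs).
have hPa : P a.
  by apply/PP; exists [:: (1, a)]; split; [move=> p; rewrite inE => /eqP -> /=; exists [::]; rewrite mul1mx | rewrite big_cons big_nil addr0 scale1r].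
case: (Phi_irr claim2) => [hall|hnone]; last by move: (hnone a ha); rewrite hPa.
have /PP [l [hl el]] := hall b hb.
apply: NNPP => hno.
have : sq b = 0.
  rewrite /sqlen {1}el form_span_l big_seq big1 // => p hp.
  have [ws ->] := hl p hp.
  case: (eqVneq (fm (W ws *m a) b) 0) => [->|hne]; first by rewrite mulr0.
  by exfalso; apply: hno; exists ws.
by apply/eqP; rewrite sq_root_neq0.
Qed.


Lemma sq_opp v : sq (- v) = sq v.
Proof. by rewrite /sqlen formNl formNr opprK. Qed.

Lemma ratio a b : a \in Phi -> b \in Phi -> fm a b != 0 -> sq a <= sq b ->
  sq b = sq a \/ sq b = 2 * sq a \/ sq b = 3 * sq a.
Proof.
move=> ha hb hf hab.
case: (eqVneq b a) => [->|hba]; first by left.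
case: (eqVneq b (- a)) => [->|hbna]; first by left; rewrite sq_opp.
have hA := sq_root_pos ha; have hB := sq_root_pos hb.
have hlt := cs_roots_lt ha hb hba hbna.
have [zp ep] := cartan ha hb; have [zq eq] := cartan hb ha.
rewrite form_sym in eq.
set f := fm a b in hf hlt ep eq *; set A := sq a in hA hab hlt ep *; set B := sq b in hB hab hlt eq *.
set p := zp%:~R : R in ep; set q := zq%:~R : R in eq.
have epA : p * A = 2 * f by rewrite -ep; field; rewrite gt_eqF.
have eqB : q * B = 2 * f by rewrite -eq; field; rewrite gt_eqF.
have hpq : p * q * (A * B) = 4 * f ^+ 2.
  have -> : p * q * (A * B) = (p * A) * (q * B) by ring.
  by rewrite epA eqB; ring.
have hAB : 0 < A * B by apply: mulr_gt0.
have pq_lt : p * q < 4.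
  have : p * q * (A * B) < 4 * (A * B) by rewrite hpq ltr_pM2l.
  by rewrite ltr_pM2r.
have pq_gt : 0 < p * q.
  have : 0 < p * q * (A * B).
    by rewrite hpq mulr_gt0 // lt_neqAle eq_sym sqrf_eq0 hf sqr_ge0.
  by rewrite pmulr_lgt0.
have qq_le : q * q <= p * q.
  have e : q * q * B = p * q * A.
    by rewrite -mulrA eqB -epA; ring.
  have : q * q * B <= p * q * B by rewrite e ler_pM2l.
  by rewrite ler_pM2r.
have iq : (zq * zq <= zp * zq)%R by rewrite -(ler_int R) !intrM.
have ip : (zp * zq < 4)%R by rewrite -(ltr_int R) intrM.
have ig : (0 < zp * zq)%R by rewrite -(ltr_int R) intrM.
have [hq1 hm] := int_facts iq ip ig.
have rq1 : q * q = 1 by rewrite /q -intrM hq1.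
have eB : B = p * q * A.
  have -> : B = q * q * B by rewrite rq1 mul1r.
  by rewrite -mulrA eqB -epA; ring.
have rm : p * q = (zp * zq)%:~R by rewrite intrM.
case: hm => [e|[e|e]]; rewrite eB rm e.
- by left; rewrite mul1r.
- by right; left.
- by right; right.
Qed.

Lemma two_lengths i : ~~ longroot G Phi (sr i) -> sq (sr i) = 1.
Proof.
move=> hnl; have hd := sroot_Phi i.
have hlt : sq (sr i) < rm.
  rewrite lt_neqAle le_rmax // andbT; apply: contra hnl => /eqP e.
  by apply/longrootP.
case: Hmin => hge [e he he1].
have [c hc hcr] := rmax_attained.
have [ws1 h1] := orbit_nonorth he hd.
have r1 := ratio (word_Phi ws1 he) hd h1.
rewrite word_sq he1 in r1; have := r1 (sq_ge1 hd) => {}r1.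
have [ws2 h2] := orbit_nonorth hd hc.
have r2 := ratio (word_Phi ws2 hd) hc h2.
rewrite word_sq hcr in r2; have := r2 (ltW hlt) => {}r2.
have [ws3 h3] := orbit_nonorth he hc.
have r3 := ratio (word_Phi ws3 he) hc h3.
rewrite word_sq he1 hcr in r3; have := r3 rmax_ge1 => {}r3.
have := sq_ge1 hd.
move: hlt r1 r2 r3; set d := sq (sr i); set r := rm => hlt r1 r2 r3 hd1.
have hr1 := rmax_ge1; rewrite -/r in hr1.
by case: r1 => e1; [|case: e1 => e1]; case: r2 => e2; try case: e2 => e2; case: r3 => e3; try case: e3 => e3; lra.
Qed.


Definition wt (i : 'I_n) : R := if longroot G Phi (sr i) then 1 else rm^-1.

Lemma wt_pos i : 0 < wt i.
Proof. by rewrite /wt; case: ifP => _; rewrite ?invr_gt0 ?rmax_pos. Qed.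

Lemma htvE (g : 'cV[R]_n) : htv G Phi g = \sum_i g i 0 * wt i.
Proof. by apply: eq_bigr => i _; rewrite /wt; case: ifP; rewrite ?mulr1. Qed.

Lemma htv_opp (g : 'cV[R]_n) : htv G Phi (- g) = - htv G Phi g.
Proof. by rewrite !htvE -sumrN; apply: eq_bigr => i _; rewrite mxE mulNr. Qed.

Lemma htv_sroot i : htv G Phi (sr i) = wt i.
Proof.
rewrite htvE (bigD1 i) //= sroot_coord eqxx mul1r big1 ?addr0 // => j /negbTE hj.
by rewrite sroot_coord hj mul0r.
Qed.

Lemma cartan_wt i (v : 'cV[R]_n) : 2 * fm (sr i) v / sq (sr i) * wt i = 2 * fm (sr i) v / rm.
Proof.
rewrite /wt; case: ifP => h.
  by move/longrootP: h => [_ ->]; rewrite mulr1.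
by rewrite two_lengths ?h // invr1 mulr1.
Qed.

Lemma htv_sref i (v : 'cV[R]_n) : htv G Phi (s i *m v) = htv G Phi v - 2 * fm (sr i) v / rm.
Proof.
rewrite !htvE -cartan_wt.
rewrite (eq_bigr (fun j => v j 0 * wt j - (if j == i then 2 * fm (sr i) v / sq (sr i) * wt i else 0))).
  rewrite sumrB; congr (_ - _).
  by rewrite (bigD1 i) //= eqxx big1 ?addr0 // => j /negbTE ->.
move=> j _; rewrite sref_coord; case: eqP => [->|_]; by rewrite ?subr0 // mulrBl.
Qed.

Lemma htv_pos (v : 'cV[R]_n) : pos v -> 0 < htv G Phi v.
Proof.
case/posrootP => hv hc; have [i hi] := nonzero_coord (Phi_neq0 hv).
rewrite htvE (bigD1 i) //=.
have h1 : 0 < v i 0 * wt i by rewrite mulr_gt0 ?wt_pos // lt_neqAle eq_sym hi hc.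
have h2 : 0 <= \sum_(j < n | j != i) v j 0 * wt j.
  by apply: sumr_ge0 => j _; rewrite mulr_ge0 ?hc // ltW ?wt_pos.
lra.
Qed.

Lemma htv_le (u v : 'cV[R]_n) : (forall i, u i 0 <= v i 0) -> htv G Phi u <= htv G Phi v.
Proof. by move=> h; rewrite !htvE; apply: ler_sum => i _; rewrite ler_pM2r ?wt_pos. Qed.

Variable ah : 'cV[R]_n.
Hypothesis Hhi : is_highest_root Phi ah.

Notation L := (level G Phi ah).

Lemma levelE (g : 'cV[R]_n) : L g = htv G Phi ah - htv G Phi g - (if pos g then 0 else 1).
Proof. by []. Qed.

Lemma sg_scale (c x : R) : 0 < c -> Num.sg (c * x) = Num.sg x.
Proof. by move=> hc; rewrite sgrM gtr0_sg // mul1r. Qed.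

Lemma level_step i (v : 'cV[R]_n) : longroot G Phi v -> L (s i *m v) = L v + Num.sg (fm (sr i) v).
Proof.
move=> /longrootP [hv hsq].
have hd := sroot_Phi i.
case: (eqVneq v (sr i)) => [ev|hne1].
  subst v.
  have hl : longroot G Phi (sr i) by apply/longrootP.
  rewrite sref_sroot !levelE htv_opp htv_sroot /wt hl posroot_opp.
  rewrite (root_sign_excl hd) sroot_pos /= -/(sq (sr i)) gtr0_sg ?sq_root_pos //.
  ring.
case: (eqVneq v (- sr i)) => [ev|hne2].
  subst v.
  have hl : longroot G Phi (sr i).
    by apply/longrootP; split => //; rewrite -sq_opp.
  rewrite sref_opp sref_sroot opprK !levelE htv_opp htv_sroot /wt hl posroot_opp.
  rewrite (root_sign_excl hd) sroot_pos /= formNr -/(sq (sr i)) sgrN gtr0_sg ?sq_root_pos //.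
  ring.
have hsign : pos (s i *m v) = pos v.
  case: (root_pos_or_neg hv) => h.
    by rewrite h sref_pos.
  have hnp : ~~ pos v by rewrite -(root_sign_excl hv).
  rewrite (negbTE hnp); apply/negbTE.
  by rewrite -(root_sign_excl (sref_Phi i hv)) sref_neg.
rewrite !levelE hsign htv_sref.
have [zd ed] := cartan hv hd.
rewrite hsq form_sym in ed.
have [zp ep] := cartan hd hv.
set f := fm (sr i) v in ed ep *.
set A := sq (sr i) in ep.
have hA : 0 < A := sq_root_pos hd.
have hr := rmax_pos.
have hlt : f ^+ 2 < A * rm.
  by rewrite -hsq /f /A; apply: cs_roots_lt.
have hAr : A <= rm by apply: le_rmax.
set d := zd%:~R : R in ed; set p := zp%:~R : R in ep.
have edr : d * rm = 2 * f by rewrite -ed; field; rewrite gt_eqF.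
have epA : p * A = 2 * f by rewrite -ep; field; rewrite gt_eqF.
have hpd : p * d * (A * rm) = 4 * f ^+ 2.
  have -> : p * d * (A * rm) = (p * A) * (d * rm) by ring.
  by rewrite epA edr; ring.
have pd_ge : 0 <= p * d.
  have : 0 <= p * d * (A * rm) by rewrite hpd mulr_ge0 // sqr_ge0.
  by rewrite pmulr_lge0 // mulr_gt0.
have pd_lt : p * d < 4.
  have : p * d * (A * rm) < 4 * (A * rm) by rewrite hpd ltr_pM2l.
  by rewrite ltr_pM2r // mulr_gt0.
have dd_le : d * d <= p * d.
  have e : d * d * rm = p * d * A by rewrite -mulrA edr -epA; ring.
  have : d * d * rm <= p * d * rm.
    by rewrite e; apply: ler_wpM2l.
  by rewrite ler_pM2r.
have idd : (zd * zd < 4)%R.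
  by rewrite -(ltr_int R) intrM; apply: le_lt_trans dd_le pd_lt.
have ef : 2 * f / rm = d by rewrite -ed.
have sgf : Num.sg f = Num.sg d.
  rewrite -ef mulrAC sg_scale // mulr_gt0 // invr_gt0 //.
rewrite ef sgf.
case: (small_int idd) => [e|[e|e]]; rewrite /d e ?sgrN1 ?sgr0 ?sgr1 //=; ring.
Qed.

End Main2.
End M2.
Import M2.

Module M4.
Lemma div_neg (R : realFieldType) (f A : R) : 0 < A -> f < 0 -> 2 * f / A < 0.
Proof. move=> hA hf. rewrite pmulr_llt0 ?invr_gt0 //. lra. Qed.
Lemma div_pos (R : realFieldType) (f A : R) : 0 < A -> 0 < f -> 0 < 2 * f / A.
Proof. move=> hA hf. rewrite pmulr_lgt0 ?invr_gt0 //. lra. Qed.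

Lemma intr_le_m1 (R : numDomainType) (z : int) : (z%:~R : R) < 0 -> (z%:~R : R) <= -1.
Proof. rewrite ltrz0 => h; have h2 : (z <= -1)%R by lia. by have := h2; rewrite -(ler_int R) intrN. Qed.

Section Main3.
Variables (R : realFieldType) (n : nat) (G : 'M[R]_n) (Phi : seq 'cV[R]_n).
Hypothesis HRS : is_irr_reduced_root_system_with_basis G Phi.
Hypothesis Hmin : min_sqlen_one G Phi.
Variable ah : 'cV[R]_n.
Hypothesis Hhi : is_highest_root Phi ah.
Let GT := @M.GT R n G Phi HRS.
Let Gpos := @M.Gpos R n G Phi HRS.
Let sq_neq0 := @M.sq_neq0 R n G Phi HRS.
Let formE := @M.formE R n G.
Let form_sym := @M.form_sym R n G Phi HRS.
Let formDl := @M.formDl R n G.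
Let formZl := @M.formZl R n G.
Let formNl := @M.formNl R n G.
Let formBl := @M.formBl R n G.
Let formDr := @M.formDr R n G Phi HRS.
Let formZr := @M.formZr R n G Phi HRS.
Let formNr := @M.formNr R n G Phi HRS.
Let formBr := @M.formBr R n G Phi HRS.
Let form0l := @M.form0l R n G.
Let form0r := @M.form0r R n G Phi HRS.
Let form_sroot := @M.form_sroot R n G.
Let reflE := @M.reflE R n G.
Let refl_self := @M.refl_self R n G.
Let refl_isom := @M.refl_isom R n G Phi HRS.
Let refl_invol := @M.refl_invol R n G.
Let refl_mul_invol := @M.refl_mul_invol R n G.
Let reflN := @M.reflN R n G Phi HRS.
Let refl_conj := @M.refl_conj R n G.
Let sq_sr_neq0 := @M.sq_sr_neq0 R n G Phi HRS.
Let sref_invol := @M.sref_invol R n G Phi HRS.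
Let sref_isom := @M.sref_isom R n G Phi HRS.
Let wordmx_nil := @M.wordmx_nil R n G.
Let wordmx_cons := @M.wordmx_cons R n G.
Let wordmx_cat := @M.wordmx_cat R n G.
Let wordmx_rcons := @M.wordmx_rcons R n G.
Let word_isom := @M.word_isom R n G Phi HRS.
Let word_inv := @M.word_inv R n G Phi HRS.
Let word_inv' := @M.word_inv' R n G Phi HRS.
Let word_invmx := @M.word_invmx R n G Phi HRS.
Let word_invmx' := @M.word_invmx' R n G Phi HRS.
Let word_inv_uniq := @M.word_inv_uniq R n G Phi HRS.
Let mx_inj_word := @M.mx_inj_word R n G Phi HRS.
Let hwolP := @M.hwolP R n G.
Let lengthW_le := @M.lengthW_le R n G.
Let lengthW_spec := @M.lengthW_spec R n G.
Let lengthW_eq := @M.lengthW_eq R n G.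
Let lengthW_rev := @M.lengthW_rev R n G Phi HRS.
Let lengthW_cat := @M.lengthW_cat R n G.
Let lengthW0 := @M.lengthW0 R n G.
Let Phi0 := @M.Phi0 R n G Phi HRS.
Let Phi_refl := @M.Phi_refl R n G Phi HRS.
Let Phi_cartan := @M.Phi_cartan R n G Phi HRS.
Let Phi_red := @M.Phi_red R n G Phi HRS.
Let Phi_irr := @M.Phi_irr R n G Phi HRS.
Let sroot_Phi := @M.sroot_Phi R n G Phi HRS.
Let Phi_int := @M.Phi_int R n G Phi HRS.
Let Phi_sgn := @M.Phi_sgn R n G Phi HRS.
Let Phi_neq0 := @M.Phi_neq0 R n G Phi HRS.
Let sq_root_pos := @M.sq_root_pos R n G Phi HRS.
Let sq_root_neq0 := @M.sq_root_neq0 R n G Phi HRS.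
Let Phi_opp := @M.Phi_opp R n G Phi HRS.
Let sref_Phi := @M.sref_Phi R n G Phi HRS.
Let word_Phi := @M.word_Phi R n G Phi HRS.
Let word_sq := @M.word_sq R n G Phi HRS.
Let word_form := @M.word_form R n G Phi HRS.
Let posrootP := @M.posrootP R n Phi.
Let negrootP := @M.negrootP R n Phi.
Let root_pos_or_neg := @M.root_pos_or_neg R n G Phi HRS.
Let pos_not_neg := @M.pos_not_neg R n G Phi HRS.
Let posroot_opp := @M.posroot_opp R n G Phi HRS.
Let negroot_opp := @M.negroot_opp R n G Phi HRS.
Let root_sign_excl := @M.root_sign_excl R n G Phi HRS.
Let srefE := @M.srefE R n G.
Let sref_coord := @M.sref_coord R n G.
Let sref_opp := @M.sref_opp R n G.
Let sroot_pos := @M.sroot_pos R n G Phi HRS.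
Let sref_sroot := @M.sref_sroot R n G Phi HRS.
Let sref_pos := @M.sref_pos R n G Phi HRS.
Let sref_neg := @M.sref_neg R n G Phi HRS.
Let ninv1 := @M.ninv1 R n G Phi HRS.
Let word_pos_or_neg := @M.word_pos_or_neg R n G Phi HRS.
Let toggle_up := @M.toggle_up R n G Phi HRS.
Let toggle_down := @M.toggle_down R n G Phi HRS.
Let ninv_le := @M.ninv_le R n G Phi HRS.
Let exchange := @M.exchange R n G Phi HRS.
Let word_short := @M.word_short R n G Phi HRS.
Let lengthW_ninv := @M.lengthW_ninv R n G Phi HRS.
Let sq_ge0 := @M2.sq_ge0 R n G Phi HRS.
Let sq_expand := @M2.sq_expand R n G Phi HRS.
Let cs := @M2.cs R n G Phi HRS.
Let cs_eq := @M2.cs_eq R n G Phi HRS.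
Let cs_roots := @M2.cs_roots R n G Phi HRS.
Let cs_roots_lt := @M2.cs_roots_lt R n G Phi HRS.
Let cartan := @M2.cartan R n G Phi HRS.
Let le_rmax := @M2.le_rmax R n G Phi.
Let bigmax_attained := @M2.bigmax_attained R n G Phi HRS.
Let n_gt0 := @M2.n_gt0 R n G Phi HRS.
Let rmax_attained := @M2.rmax_attained R n G Phi HRS.
Let rmax_pos := @M2.rmax_pos R n G Phi HRS.
Let rmax_ge1 := @M2.rmax_ge1 R n G Phi Hmin.
Let longrootP := @M2.longrootP R n G Phi.
Let sq_ge1 := @M2.sq_ge1 R n G Phi Hmin.
Let csum_int := @M2.csum_int R n G Phi HRS.
Let csum_pos := @M2.csum_pos R n G Phi HRS.
Let csum_sref := @M2.csum_sref R n G.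
Let form_sum_coord := @M2.form_sum_coord R n G.
Let exists_pos_form := @M2.exists_pos_form R n G Phi HRS.
Let pos_descent_N := @M2.pos_descent_N R n G Phi HRS.
Let pos_descent := @M2.pos_descent R n G Phi HRS.
Let refl_word := @M2.refl_word R n G Phi HRS.
Let inW_word := @M2.inW_word R n G Phi HRS.
Let word_inW := @M2.word_inW R n G Phi HRS.
Let form_span_l := @M2.form_span_l R n G.
Let orbit_nonorth := @M2.orbit_nonorth R n G Phi HRS.
Let sq_opp := @M2.sq_opp R n G Phi HRS.
Let ratio := @M2.ratio R n G Phi HRS.
Let two_lengths := @M2.two_lengths R n G Phi HRS Hmin.
Let wt_pos := @M2.wt_pos R n G Phi HRS.
Let htvE := @M2.htvE R n G Phi.
Let htv_opp := @M2.htv_opp R n G Phi.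
Let htv_sroot := @M2.htv_sroot R n G Phi.
Let cartan_wt := @M2.cartan_wt R n G Phi HRS Hmin.
Let htv_sref := @M2.htv_sref R n G Phi HRS Hmin.
Let htv_pos := @M2.htv_pos R n G Phi HRS.
Let htv_le := @M2.htv_le R n G Phi HRS.
Let levelE := @M2.levelE R n G Phi ah.
Let level_step := @M2.level_step R n G Phi HRS Hmin ah.
Let sroot_coord := sroot_coord R.
Let sroot_neq0 := sroot_neq0 R.
Notation fm := (form G).
Notation sq := (sqlen G).
Notation sr := (@sroot R n).
Notation W := (@wordmx R n G).
Notation s := (@sref R n G).
Notation pos := (posroot Phi).
Notation neg := (negroot Phi).
Notation rm := (rmax G Phi).
Notation L := (level G Phi ah).
Notation long := (longroot G Phi).
Notation htv := (htv G Phi).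

Lemma mxB_coord (u v : 'cV[R]_n) i : (u - v) i 0 = u i 0 - v i 0.
Proof. by rewrite !mxE. Qed.

Lemma ah_Phi : ah \in Phi. Proof. by case: Hhi. Qed.
Lemma ah_high b : b \in Phi -> forall i, b i 0 <= ah i 0.
Proof. by case: Hhi => _ h /h. Qed.

Lemma ah_pos : pos ah.
Proof.
apply/posrootP; split; first exact: ah_Phi.
move=> i; apply: le_trans (ah_high (sroot_Phi i) i).
by rewrite sroot_coord ler0n.
Qed.

Lemma ah_dom i : 0 <= fm (sr i) ah.
Proof.
rewrite leNgt; apply/negP => hlt.
have := ah_high (sref_Phi i ah_Phi) i; rewrite sref_coord eqxx.
have : 2 * fm (sr i) ah / sq (sr i) < 0.
  by apply: div_neg => //; apply: sq_root_pos; apply: sroot_Phi.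
move=> h1 h2; lra.
Qed.

Lemma dom_form (x y : 'cV[R]_n) : (forall i, 0 <= x i 0) -> (forall i, 0 <= fm (sr i) y) ->
  0 <= fm x y.
Proof. by move=> hx hy; rewrite form_sum_coord; apply: sumr_ge0 => i _; rewrite mulr_ge0. Qed.

Definition dominant (v : 'cV[R]_n) := [forall i, 0 <= fm (sr i) v].

Lemma dominantP v : reflect (forall i, 0 <= fm (sr i) v) (dominant v).
Proof. exact: forallP. Qed.

Definition mu (v : 'cV[R]_n) := csum ah - csum v.

Lemma mu_ge0 b : b \in Phi -> 0 <= mu b.
Proof.
move=> hb; rewrite /mu /csum subr_ge0; apply: ler_sum => i _; exact: ah_high.
Qed.

Lemma mu_int b : b \in Phi -> isint (mu b).
Proof.
move=> hb; have [z1 e1] := csum_int ah_Phi; have [z2 e2] := csum_int hb.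
by exists (z1 - z2); rewrite /mu e1 e2 intrB.
Qed.

Lemma int_le_nat (x : R) : isint x -> 0 <= x -> exists N : nat, x <= N%:R.
Proof.
case=> z -> hz; exists `|z|%N.
have zp : (0 <= z)%R by rewrite -(ler0z R).
by rewrite -[z in z%:~R]gez0_abs.
Qed.

Lemma mu_sref i b : mu (s i *m b) = mu b + 2 * fm (sr i) b / sq (sr i).
Proof. by rewrite /mu csum_sref; ring. Qed.

Lemma cartan_neg_le i b : b \in Phi -> fm (sr i) b < 0 -> 2 * fm (sr i) b / sq (sr i) <= -1.
Proof.
move=> hb hlt; have [z ez] := cartan (sroot_Phi i) hb.
have : 2 * fm (sr i) b / sq (sr i) < 0.
  by apply: div_neg => //; apply: sq_root_pos; apply: sroot_Phi.
by rewrite ez; apply: intr_le_m1.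
Qed.

Lemma dominant_conj_N (N : nat) b : b \in Phi -> mu b <= N%:R ->
  exists ws, dominant (W ws *m b).
Proof.
elim: N b => [|N IH] b hb hN.
  case: (boolP (dominant b)) => hd; first by exists [::]; rewrite mul1mx.
  move/forallPn: hd => [i]; rewrite -ltNge => hi.
  have := mu_ge0 (sref_Phi i hb); rewrite mu_sref.
  have := cartan_neg_le hb hi; move: hN => /=; lra.
case: (boolP (dominant b)) => hd; first by exists [::]; rewrite mul1mx.
move/forallPn: hd => [i]; rewrite -ltNge => hi.
have [ws hws] : exists ws, dominant (W ws *m (s i *m b)).
  apply: IH; first exact: sref_Phi.
  rewrite mu_sref; have := cartan_neg_le hb hi; move: hN; rewrite -natr1; lra.
by exists (rcons ws i); rewrite wordmx_rcons -mulmxA.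
Qed.

Lemma dominant_conj b : b \in Phi -> exists ws, dominant (W ws *m b).
Proof.
move=> hb; have [N hN] := int_le_nat (mu_int hb) (mu_ge0 hb).
exact: dominant_conj_N hN.
Qed.

Lemma ah_long : long ah.
Proof.
apply/longrootP; split; first exact: ah_Phi.
apply/eqP; rewrite eq_le le_rmax ?ah_Phi //=.
have [c hc hcr] := rmax_attained.
have [ws /dominantP hd] := dominant_conj hc.
set c' := W ws *m c in hd.
have hc' : c' \in Phi by apply: word_Phi.
have e1 : sq c' = rm by rewrite word_sq.
have hdiff : forall i, 0 <= (ah - c') i 0.
  by move=> i; rewrite mxB_coord subr_ge0; exact: (ah_high hc' i).
have h1 := dom_form hdiff hd.
have h2 := dom_form hdiff ah_dom.
rewrite formBl -/(sq c') e1 in h1.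
rewrite formBl -/(sq ah) in h2.
rewrite form_sym in h2; lra.
Qed.

Lemma dom_long_eq v : long v -> dominant v -> v = ah.
Proof.
move=> /longrootP [hv hsq] /dominantP hd.
have /longrootP [_ hah] := ah_long.
have hdiff : forall i, 0 <= (ah - v) i 0.
  by move=> i; rewrite !mxE subr_ge0; apply: ah_high.
have h1 := dom_form hdiff hd.
rewrite formBl -/(sq v) hsq in h1.
have : sq (ah - v) <= 0.
  rewrite /sqlen formBl !formBr -/(sq ah) -/(sq v) hsq hah [fm v ah]form_sym; lra.
move=> hle; apply/esym/eqP; rewrite -subr_eq0; apply/negPn/negP => hne.
by have := Gpos hne; rewrite ltNge hle.
Qed.

Lemma level_ah : L ah = 0.
Proof. by rewrite levelE ah_pos subrr subr0. Qed.

Lemma long_sref i v : long v -> long (s i *m v).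
Proof.
move=> /longrootP [h1 h2]; apply/longrootP; split; first exact: sref_Phi.
have e : s i *m v = W [:: i] *m v by rewrite wordmx_cons wordmx_nil mulmx1.
by rewrite e word_sq.
Qed.

Lemma long_word ws v : long v -> long (W ws *m v).
Proof.
move=> /longrootP [h1 h2]; apply/longrootP; split; first exact: word_Phi.
by rewrite word_sq.
Qed.

Lemma spath_rcons b gs a i : spath G Phi ah b gs a ->
  L (s i *m a) = L a + 1 -> spath G Phi ah b (rcons gs i) (s i *m a).
Proof.
elim: gs b => [|g gs IH] b /=.
  by move=> [hb <-] hL; do !split => //; apply: long_sref.
by move=> [hb [hL hp]] hL2; split => //; split => //; apply: IH.
Qed.

Lemma spath_inv b gs a : spath G Phi ah b gs a ->
  [/\ long b, long a, W (rev gs) *m b = a & L a = L b + (size gs)%:R].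
Proof.
elim: gs b => [|g gs IH] b /=.
  by move=> [hb <-]; split => //; rewrite ?mul1mx ?addr0.
move=> [hb [hL hp]]; have [h1 h2 h3 h4] := IH _ hp; split => //.
  by rewrite rev_cons wordmx_rcons -mulmxA.
by rewrite h4 hL -natr1; ring.
Qed.

Lemma spath_rcons_inv b gs i a : spath G Phi ah b (rcons gs i) a ->
  exists a0, [/\ spath G Phi ah b gs a0, a = s i *m a0 & L a = L a0 + 1].
Proof.
elim: gs b => [|g gs IH] b /=.
  move=> [hb [hL [hb' e]]]; exists b; split => //.
  by rewrite -e.
move=> [hb [hL hp]]; have [a0 [h1 h2 h3]] := IH _ hp.
by exists a0; split.
Qed.

Lemma ascent_N (N : nat) v : long v -> mu v <= N%:R -> exists gs, spath G Phi ah ah gs v.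
Proof.
elim: N v => [|N IH] v hv hN; have hvP : v \in Phi by case/longrootP: hv.
  case: (boolP (dominant v)) => hd.
    by exists [::]; rewrite (dom_long_eq hv hd); split => //; apply: ah_long.
  move/forallPn: hd => [i]; rewrite -ltNge => hi.
  have := mu_ge0 (sref_Phi i hvP); rewrite mu_sref.
  have := cartan_neg_le hvP hi; move: hN => /=; lra.
case: (boolP (dominant v)) => hd.
  by exists [::]; rewrite (dom_long_eq hv hd); split => //; apply: ah_long.
move/forallPn: hd => [i]; rewrite -ltNge => hi.
have [gs hgs] : exists gs, spath G Phi ah ah gs (s i *m v).
  apply: IH; first exact: long_sref.
  rewrite mu_sref; have := cartan_neg_le hvP hi; move: hN; rewrite -natr1; lra.
exists (rcons gs i); rewrite -(sref_invol i v); apply: spath_rcons => //.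
rewrite (level_step i (long_sref i hv)).
have -> : fm (sr i) (s i *m v) = - fm (sr i) v.
  by rewrite -{1}(sref_invol i (sr i)) sref_isom sref_sroot formNl.
by rewrite sgrN ltr0_sg // opprK.
Qed.

Lemma ascent v : long v -> exists gs, spath G Phi ah ah gs v.
Proof.
move=> hv; have hvP : v \in Phi by case/longrootP: hv.
have [N hN] := int_le_nat (mu_int hvP) (mu_ge0 hvP).
exact: ascent_N hN.
Qed.

Lemma sg_bound (x : R) : `|Num.sg x| <= 1.
Proof. by case: sgrP; rewrite ?normr0 ?normr1 ?normrN ?normr1. Qed.

Lemma step_bound i v : long v -> -1 <= L (s i *m v) - L v <= 1.
Proof.
move=> hv; rewrite level_step // addrC addKr.
by rewrite -ler_norml sg_bound.
Qed.

Lemma word_bound ws b : long b ->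
  - (size ws)%:R <= L (W ws *m b) - L b <= (size ws)%:R.
Proof.
move=> hb; elim: ws => [|i ws IH] /=; first by rewrite mul1mx subrr oppr0 lexx.
have /andP [h1 h2] := step_bound i (long_word ws hb).
move/andP: IH => [h3 h4]; rewrite -mulmxA -natr1.
apply/andP; split; lra.
Qed.

Lemma part_a a b x : long a -> long b -> inW G Phi x -> x *m b = a ->
  `|L a - L b| <= (lengthW G x)%:R.
Proof.
move=> ha hb /inW_word [ws ->] hx.
have [ws' [e1 e2]] := lengthW_spec ws.
rewrite -e2; move: hx; rewrite -e1 => <-.
by rewrite ler_norml; apply: word_bound.
Qed.

Lemma word_path ws b : long b -> L (W ws *m b) - L b = (size ws)%:R ->
  spath G Phi ah b (rev ws) (W ws *m b).
Proof.
move=> hb; elim: ws => [|i ws IH] /= => [_|e].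
  by rewrite mul1mx; split.
have /andP [h1 h2] := step_bound i (long_word ws hb).
have /andP [h3 h4] := word_bound ws hb.
move: e; rewrite -mulmxA -natr1 => e.
have e1 : L (W ws *m b) - L b = (size ws)%:R by lra.
rewrite rev_cons; apply: spath_rcons; first exact: IH.
lra.
Qed.

Lemma sref_form_swap i u w : fm (s i *m u) w = fm u (s i *m w).
Proof. by rewrite -{1}(sref_invol i w) sref_isom. Qed.

Lemma word_form_swap ws u w : fm (W ws *m u) w = fm u (W (rev ws) *m w).
Proof. by rewrite -{1}(word_inv' ws w) word_form. Qed.

Lemma path_inv_neg gs v : spath G Phi ah ah gs v ->
  forall g, pos g -> neg (W gs *m g) -> fm v g < 0.
Proof.
elim/last_ind: gs v => [|gs i IH] v.
  move=> _ g hg; rewrite mul1mx => hn.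
  by move: (pos_not_neg hg); rewrite hn.
move=> /spath_rcons_inv [a0 [hp -> hL]] g hg.
have [_ ha0 _ _] := spath_inv hp.
rewrite wordmx_rcons -mulmxA.
case: (eqVneq g (sr i)) => [->|hne].
  rewrite sref_form_swap sref_sroot formNr oppr_lt0 => _.
  move: hL; rewrite level_step // => e.
  have : Num.sg (fm (sr i) a0) = 1 by move: e; set x := Num.sg _; set y := L a0; lra.
  by rewrite form_sym; move/eqP; rewrite sgr_cp0.
move=> hn; rewrite sref_form_swap; apply: IH => //.
exact: sref_pos.
Qed.

Lemma dom_neg ws v : W ws *m ah = v ->
  forall g, pos g -> fm v g < 0 -> neg (W (rev ws) *m g).
Proof.
move=> <- g hg; rewrite word_form_swap => hlt.
have hr : W (rev ws) *m g \in Phi by apply: word_Phi; case/posrootP: hg.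
case: (root_pos_or_neg hr) => // /posrootP [_ hc].
have := dom_form hc ah_dom; rewrite form_sym => h; lra.
Qed.

Lemma vec_decomp (v : 'cV[R]_n) : v = \sum_j v j 0 *: sr j.
Proof.
apply/matrixP => k l; rewrite (ord1 l) summxE.
rewrite (eq_bigr (fun j => v j 0 * (k == j)%:R)) => [|j _]; last by rewrite mxE sroot_coord.
rewrite (bigD1 k) //= eqxx mulr1 big1 ?addr0 // => j /negbTE hj.
by rewrite eq_sym hj mulr0.
Qed.

Lemma pos_simple ws : (forall i, pos (W ws *m sr i)) -> forall g, pos g -> pos (W ws *m g).
Proof.
move=> hs g /posrootP [hg hc].
have hr : W ws *m g \in Phi by apply: word_Phi.
case: (root_pos_or_neg hr) => // /negrootP [_ hn].
have hcoord : forall k, 0 <= (W ws *m g) k 0.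
  move=> k; rewrite [g]vec_decomp mulmx_sumr summxE; apply: sumr_ge0 => j _.
  rewrite -scalemxAr mxE mulr_ge0 //; by case/posrootP: (hs j) => _ ->.
have : W ws *m g = 0.
  apply/matrixP => k l; rewrite (ord1 l) [RHS]mxE; apply/eqP; rewrite eq_le hn hcoord //.
by move/eqP; rewrite (negbTE (Phi_neq0 hr)).
Qed.

Lemma determination_k (k : nat) ws1 ws2 : (lengthW G (W ws1) <= k)%N ->
  (forall g, pos g -> neg (W ws1 *m g) = neg (W ws2 *m g)) -> W ws1 = W ws2.
Proof.
elim: k ws1 ws2 => [|k IH] ws1 ws2 hk hpred.
  have h1 : lengthW G (W ws1) = 0%N by apply/eqP; rewrite -leqn0.
  have e1 := lengthW0 h1.
  have h2 : lengthW G (W ws2) = 0%N.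
    rewrite lengthW_ninv -[RHS]h1 lengthW_ninv; apply: eq_in_count => g.
    by rewrite mem_undup => hg; rewrite /inv; case hp: (pos g) => //=; rewrite hpred.
  by rewrite e1 (lengthW0 h2).
case: (boolP [forall i, pos (W ws1 *m sr i)]) => [/forallP hall|].
  have h0 : lengthW G (W ws1) = 0%N.
    rewrite lengthW_ninv; apply/eqP; rewrite -leqn0 leqNgt -has_count; apply/hasPn => g _.
    rewrite /inv; apply/negP => /andP [hg hn].
    by move: (pos_not_neg (pos_simple hall hg)); rewrite hn.
  by apply: (IH) => //; rewrite h0.
move/forallPn => [i hi].
have hri : W ws1 *m sr i \in Phi by apply: word_Phi; apply: sroot_Phi.
have hn1 : neg (W ws1 *m sr i) by rewrite (root_sign_excl hri).
have hn2 : neg (W ws2 *m sr i) by rewrite -hpred ?sroot_pos.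
have hlen : (lengthW G (W (rcons ws1 i))).+1 = lengthW G (W ws1).
  rewrite -lengthW_rev rev_rcons -[in RHS]lengthW_rev !lengthW_ninv.
  by rewrite (toggle_down (ws := rev ws1) (i := i)) // revK.
have e : W (rcons ws1 i) = W (rcons ws2 i).
  apply: IH; first by rewrite -ltnS hlen.
  move=> g hg; rewrite !wordmx_rcons -!mulmxA.
  case: (eqVneq g (sr i)) => [->|hne].
    rewrite sref_sroot !mulmxN !negroot_opp.
    have hri2 : W ws2 *m sr i \in Phi by apply: word_Phi; apply: sroot_Phi.
    have p1 : pos (W ws1 *m sr i) = false by apply/negbTE; rewrite -root_sign_excl.
    have p2 : pos (W ws2 *m sr i) = false by apply/negbTE; rewrite -root_sign_excl.
    by rewrite p1 p2.
  by rewrite hpred // sref_pos.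
apply: mx_ext => v; move: e => /(congr1 (fun M => M *m (s i *m v))).
by rewrite !wordmx_rcons -!mulmxA sref_invol.
Qed.

Lemma determination ws1 ws2 :
  (forall g, pos g -> neg (W ws1 *m g) = neg (W ws2 *m g)) -> W ws1 = W ws2.
Proof. exact: determination_k (leqnn _). Qed.

Lemma L_nat v : long v -> exists k : nat, L v = k%:R.
Proof.
move=> hv; have [gs hp] := ascent hv; have [_ _ _ e] := spath_inv hp.
by exists (size gs); rewrite e level_ah add0r.
Qed.

Lemma L_ge0 v : long v -> 0 <= L v.
Proof. by move=> /L_nat [k ->]; rewrite ler0n. Qed.

Lemma uniq_pred ws v : long v -> W ws *m ah = v -> (lengthW G (W ws))%:R = L v ->
  exists ws', W ws' = W ws /\
    forall g, pos g -> neg (W (rev ws') *m g) = (fm v g < 0).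
Proof.
move=> hv hx hl; have [ws' [e1 e2]] := lengthW_spec ws.
exists ws'; split => //.
have hp : spath G Phi ah ah (rev ws') v.
  rewrite -hx -e1; apply: word_path; first exact: ah_long.
  by rewrite e1 hx level_ah subr0 e2.
move=> g hg; apply/idP/idP.
  exact: (path_inv_neg hp hg).
by apply: dom_neg => //; rewrite e1.
Qed.

Lemma uniq_at_ah ws1 ws2 v : long v -> W ws1 *m ah = v -> W ws2 *m ah = v ->
  (lengthW G (W ws1))%:R = L v -> (lengthW G (W ws2))%:R = L v -> W ws1 = W ws2.
Proof.
move=> hv h1 h2 l1 l2.
have [ws1' [e1 p1]] := uniq_pred hv h1 l1.
have [ws2' [e2 p2]] := uniq_pred hv h2 l2.
have e : W (rev ws1') = W (rev ws2').
  by apply: determination => g hg; rewrite p1 // p2.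
by rewrite -e1 -e2 -(revK ws1') -(revK ws2'); apply: word_inv_uniq.
Qed.

Lemma xab_unique_case a b ws1 ws2 : long a -> long b -> L b <= L a ->
  W ws1 *m b = a -> W ws2 *m b = a ->
  (lengthW G (W ws1))%:R = L a - L b -> (lengthW G (W ws2))%:R = L a - L b ->
  W ws1 = W ws2.
Proof.
move=> ha hb hba h1 h2 l1 l2.
have [zs hz] := ascent hb; have [_ _ hzb hLb] := spath_inv hz.
rewrite level_ah add0r in hLb.
have hz_le : (lengthW G (W (rev zs)) <= size zs)%N by rewrite -(size_rev zs) lengthW_le.
have key : forall ws, W ws *m b = a -> (lengthW G (W ws))%:R = L a - L b ->
    (lengthW G (W (ws ++ rev zs)))%:R = L a.
  move=> ws hw lw.
  have hmap : W (ws ++ rev zs) *m ah = a by rewrite wordmx_cat -mulmxA hzb.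
  apply/eqP; rewrite eq_le; apply/andP; split.
    have := lengthW_cat ws (rev zs); rewrite -wordmx_cat => hc.
    have : ((lengthW G (W (ws ++ rev zs)))%:R : R) <= (lengthW G (W ws) + size zs)%:R.
      by rewrite ler_nat (leq_trans hc) // leq_add2l.
    by rewrite natrD lw hLb => h; apply: (le_trans h); rewrite subrK.
  have := part_a ha ah_long (word_inW (ws ++ rev zs)) hmap.
  by rewrite level_ah subr0 ger0_norm ?L_ge0.
have e : W (ws1 ++ rev zs) = W (ws2 ++ rev zs).
  apply: (@uniq_at_ah _ _ a) => //; try apply: key => //.
    by rewrite wordmx_cat -mulmxA hzb.
  by rewrite wordmx_cat -mulmxA hzb.
apply: mx_ext => v; move: e => /(congr1 (fun M => M *m (W zs *m v))).
by rewrite !wordmx_cat -!mulmxA word_inv.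
Qed.

Lemma xab_unique a b x y : long a -> long b ->
  is_xab G Phi ah a b x -> is_xab G Phi ah a b y -> x = y.
Proof.
move=> ha hb [/inW_word [wsx ->] [hx lx]] [/inW_word [wsy ->] [hy ly]].
case: (lerP (L b) (L a)) => hab.
  rewrite ger0_norm ?subr_ge0 // in lx ly.
  exact: (xab_unique_case ha hb hab hx hy lx ly).
rewrite ltr0_norm ?subr_lt0 // opprB in lx ly.
have hx' : W (rev wsx) *m a = b by rewrite -hx word_inv.
have hy' : W (rev wsy) *m a = b by rewrite -hy word_inv.
have e : W (rev wsx) = W (rev wsy).
  apply: (xab_unique_case hb ha (ltW hab) hx' hy').
    by rewrite lengthW_rev.
  by rewrite lengthW_rev.
by rewrite -(revK wsx) -(revK wsy); apply: word_inv_uniq.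
Qed.

Lemma natr_eqR (a b : nat) : (a%:R : R) = b%:R -> a = b.
Proof. by move/eqP; rewrite eqr_nat => /eqP. Qed.

Lemma path_xab b gs a : spath G Phi ah b gs a -> is_xab G Phi ah a b (W (rev gs)).
Proof.
move=> hp; have [hb ha hx hL] := spath_inv hp.
split; first exact: word_inW.
split => //.
have hge := part_a ha hb (word_inW (rev gs)) hx.
apply/eqP; rewrite eq_le hge andbT.
rewrite hL addrC addKr ger0_norm ?ler0n // ler_nat.
by rewrite -(size_rev gs) lengthW_le.
Qed.

Lemma path_xab_rev a gs b : spath G Phi ah a gs b -> is_xab G Phi ah a b (W gs).
Proof.
move=> hp; have [ha hb hx hL] := spath_inv hp.
have hx' : W gs *m b = a by rewrite -hx -{1}(revK gs) word_inv.
split; first exact: word_inW.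
split => //.
have hge := part_a ha hb (word_inW gs) hx'.
apply/eqP; rewrite eq_le hge andbT.
rewrite hL distrC addrC addKr ger0_norm ?ler0n // ler_nat.
exact: lengthW_le.
Qed.

Lemma part_b1 a b : long a -> long b ->
  (exists x, is_xab G Phi ah a b x) <->
  ((exists gs, spath G Phi ah b gs a) \/ (exists gs, spath G Phi ah a gs b)).
Proof.
move=> ha hb; split.
  move=> [x [/inW_word [ws ->] [hx lx]]].
  have [ws' [e1 e2]] := lengthW_spec ws.
  rewrite -e1 in hx; rewrite -e2 in lx.
  case: (lerP (L b) (L a)) => hab.
    left; exists (rev ws'); rewrite -hx; apply: word_path => //.
    by rewrite hx lx ger0_norm // subr_ge0.
  right; exists ws'.
  have hx' : W (rev ws') *m a = b by rewrite -hx word_inv.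
  rewrite -hx' -{1}(revK ws'); apply: word_path => //.
  by rewrite hx' size_rev lx distrC ger0_norm // subr_ge0 ltW.
case=> [[gs hp]|[gs hp]].
  by exists (W (rev gs)); apply: path_xab.
by exists (W gs); apply: path_xab_rev.
Qed.

Lemma part_b3 a b x : long a -> long b -> is_xab G Phi ah a b x ->
  (exists gs, spath G Phi ah b gs a) ->
  forall gs, spath G Phi ah b gs a <-> reduced_expr G x (rev gs).
Proof.
move=> ha hb hx [gs0 hp0] gs.
have [_ _ _ hL0] := spath_inv hp0.
have hab : L b <= L a by rewrite hL0 lerDl ler0n.
have hxl := hx; case: hxl => _ [hxb lx].
rewrite ger0_norm ?subr_ge0 // in lx.
split.
  move=> hp; have hy := path_xab hp.
  have e := xab_unique ha hb hy hx.
  split => //; rewrite size_rev -e.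
  case: hy => _ [_ ly]; apply: natr_eqR; rewrite ly.
  have [_ _ _ hL] := spath_inv hp.
  by rewrite hL addrC addKr ger0_norm ?ler0n.
move=> [e1 e2].
rewrite -(revK gs) -hxb -e1; apply: word_path => //.
by rewrite e1 hxb -lx e2.
Qed.

Lemma htv_neg v : neg v -> htv v < 0.
Proof.
move=> hv; rewrite -[v]opprK htv_opp oppr_lt0; apply: htv_pos.
by rewrite posroot_opp.
Qed.

Lemma level_mono u v : long u -> long v -> le_root u v -> L v <= L u.
Proof.
move=> hu hv huv.
have hu' : u \in Phi by case/longrootP: hu.
have hv' : v \in Phi by case/longrootP: hv.
have hh := htv_le huv.
rewrite !levelE.
case hpu: (pos u); case hpv: (pos v).
- lra.
- have : neg v by rewrite root_sign_excl // hpv.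
  move/htv_neg; have := htv_pos hpu; lra.
- have hnu : neg u by rewrite root_sign_excl // hpu.
  have [k1 e1] := L_nat hu; have [k2 e2] := L_nat hv.
  have h1 := htv_pos hpv; have h2 := htv_neg hnu.
  have hlt : L v < L u + 1 by rewrite !levelE hpu hpv; lra.
  have : (k2 < k1.+1)%N by rewrite -(ltr_nat R) -natr1 -e1 -e2.
  by rewrite ltnS -(ler_nat R) -e1 -e2 !levelE hpu hpv.
- lra.
Qed.

Lemma part_c a b c x1 x2 : long a -> long b -> long c ->
  le_root a b -> le_root b c ->
  is_xab G Phi ah a b x1 -> is_xab G Phi ah b c x2 ->
  is_xab G Phi ah a c (x1 *m x2) /\
  lengthW G (x1 *m x2) = (lengthW G x1 + lengthW G x2)%N.
Proof.
move=> ha hb hc hab hbc [/inW_word [ws1 ->] [h1 l1]] [/inW_word [ws2 ->] [h2 l2]].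
have mab := level_mono ha hb hab; have mbc := level_mono hb hc hbc.
rewrite ger0_norm ?subr_ge0 // in l1; rewrite ger0_norm ?subr_ge0 // in l2.
have hm : W ws1 *m W ws2 *m c = a by rewrite -mulmxA h2.
have hw : inW G Phi (W ws1 *m W ws2) by rewrite -wordmx_cat; apply: word_inW.
have hge := part_a ha hc hw hm.
rewrite ger0_norm ?subr_ge0 in hge; last exact: le_trans mab.
have hle := lengthW_cat ws1 ws2.
have hle' : ((lengthW G (W ws1 *m W ws2))%:R : R) <= L a - L c.
  have : ((lengthW G (W ws1 *m W ws2))%:R : R) <= (lengthW G (W ws1) + lengthW G (W ws2))%:R.
    by rewrite ler_nat.
  by rewrite natrD l1 l2 => h; apply: (le_trans h); rewrite addrA subrK.
have eR : ((lengthW G (W ws1 *m W ws2))%:R : R) = L a - L c.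
  by apply/eqP; rewrite eq_le hle' hge.
split.
  split => //; split => //.
  by rewrite eR ger0_norm // subr_ge0; exact: le_trans mab.
apply: natr_eqR; rewrite natrD eR l1 l2; ring.
Qed.

Lemma long_descent_N (N : nat) a : long a -> pos a -> csum a <= N%:R ->
  exists ws j, a = W ws *m sr j /\ (size ws)%:R = htv a - 1.
Proof.
elim: N a => [|N IH] a hl ha hN.
  by have := csum_pos ha; rewrite ltNge hN.
case: (boolP [exists j, a == sr j]) => [/existsP [j /eqP ea]|hnj].
  exists [::], j; split; first by rewrite mul1mx.
  by rewrite ea htv_sroot /wt -ea hl subrr.
have [i hi] := exists_pos_form ha.
have hne : a != sr i by apply: contra hnj => /eqP ->; apply/existsP; exists i.
have hp := sref_pos ha hne.
have hl' := long_sref i hl.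
have hc : 1 <= 2 * fm (sr i) a / sq (sr i).
  apply: int_ge1; first by apply: cartan; [apply: sroot_Phi | case/posrootP: ha].
  by apply: div_pos => //; apply: sq_root_pos; apply: sroot_Phi.
have [ws [j [e hs]]] : exists ws j, s i *m a = W ws *m sr j /\ (size ws)%:R = htv (s i *m a) - 1.
  by apply: IH => //; rewrite csum_sref; move: hN; rewrite -natr1; lra.
exists (i :: ws), j; split; first by rewrite /= -mulmxA -e sref_invol.
have hL := level_step i hl; rewrite gtr0_sg // !levelE hp ha in hL.
by rewrite /= -natr1 hs; lra.
Qed.

Lemma part_d a : long a -> pos a -> is_xab G Phi ah (- a) a (refl G a).
Proof.
move=> hl ha; have haP : a \in Phi by case/posrootP: ha.
have hw : inW G Phi (refl G a).
  exists [:: a]; split; last by rewrite /= mulmx1.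
  by move=> b; rewrite inE => /eqP ->.
have hx : refl G a *m a = - a by rewrite refl_self // sq_root_neq0.
have hna : long (- a).
  by apply/longrootP; case/longrootP: hl => h1 h2; split; [apply: Phi_opp | rewrite sq_opp].
split => //; split => //.
have [N hN] := int_le_nat (csum_int haP) (ltW (csum_pos ha)).
have [ws [j [e hs]]] := long_descent_N hl ha hN.
have eL : L (- a) - L a = 2 * htv a - 1.
  rewrite !levelE ha posroot_opp (negbTE (pos_not_neg ha)) htv_opp; ring.
have hge := part_a hna hl hw hx.
apply/eqP; rewrite eq_le hge andbT eL ger0_norm; last by move: (ler0n R (size ws)); rewrite hs; lra.
have er : refl G a = W (ws ++ j :: rev ws).
  rewrite wordmx_cat wordmx_cons e; apply: mx_ext => v.
  rewrite -[v in LHS](word_inv' ws v) mulmxA refl_conj; last exact: word_isom.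
  by rewrite /sref !mulmxA.
rewrite er; apply: le_trans (_ : ((size (ws ++ j :: rev ws))%:R : R) <= _).
  by rewrite ler_nat lengthW_le.
by rewrite size_cat /= size_rev -addSnnS natrD -natr1 hs; lra.
Qed.

Lemma fm_ah_sum g : fm ah g = \sum_i g i 0 * fm (sr i) ah.
Proof. by rewrite form_sym form_sum_coord. Qed.

Lemma support_I g : pos g -> fm ah g = 0 -> posroot_I G Phi ah g.
Proof.
move=> hg h0; apply/andP; split => //.
have /posrootP [_ hc] := hg.
apply/forallP => i; apply/implyP => hi.
have hterms : forall j, true -> 0 <= g j 0 * fm (sr j) ah.
  by move=> j _; rewrite mulr_ge0 ?hc ?ah_dom.
rewrite fm_ah_sum in h0.
have e : g i 0 * fm (sr i) ah = 0 by apply: (psumr_eq0P hterms h0).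
move/eqP: e.
rewrite mulf_eq0 => /orP [//|h].
by move: hi; rewrite /Itilde form_sym h.
Qed.

Lemma I_orth g : posroot_I G Phi ah g -> fm ah g = 0.
Proof.
move=> /andP [_ /forallP hI]; rewrite fm_ah_sum big1 // => i _.
have := hI i; case: (boolP (Itilde G ah i)) => [hi _|hi /= /eqP ->]; last by rewrite mul0r.
by move: hi; rewrite /Itilde form_sym => /eqP ->; rewrite mulr0.
Qed.

Lemma path_inX gs a : spath G Phi ah ah gs a -> inX G Phi ah (W (rev gs)).
Proof.
move=> hp; have [_ ha hx _] := spath_inv hp.
split; first exact: word_inW.
move=> g hgI; have hg : pos g by case/andP: hgI.
have h0 := I_orth hgI.
have hr : W (rev gs) *m g \in Phi by apply: word_Phi; case/posrootP: hg.
case: (root_pos_or_neg hr) => // hn.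
have hb : pos (- (W (rev gs) *m g)) by rewrite posroot_opp.
have hnb : neg (W gs *m - (W (rev gs) *m g)).
  by rewrite mulmxN -{1}(revK gs) word_inv negroot_opp.
have := path_inv_neg hp hb hnb.
by rewrite -hx formNr word_form h0 oppr0 ltxx.
Qed.

Lemma part_e a : long a ->
  (exists x, inX G Phi ah x /\ x *m ah = a /\ is_xab G Phi ah a ah x) /\
  (forall x, inX G Phi ah x -> x *m ah = a -> is_xab G Phi ah a ah x).
Proof.
move=> ha; have [gs hp] := ascent ha.
have [_ _ hx _] := spath_inv hp.
have hz := path_xab hp.
split; first by exists (W (rev gs)); split; [apply: path_inX hp | split].
move=> x [hW hX] hxa.
have [ws ex] := inW_word hW; subst x.
have pz : forall b, pos b -> neg (W gs *m b) = (fm a b < 0).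
  move=> b hb; apply/idP/idP => [hn|]; first exact: (path_inv_neg hp hb hn).
  by move=> hlt; rewrite -(revK gs); apply: (dom_neg hx hb).
have px : forall b, pos b -> neg (W (rev ws) *m b) = (fm a b < 0).
  move=> b hb; apply/idP/idP; last by apply: dom_neg.
  move=> hn; rewrite -hxa word_form_swap.
  set g' := W (rev ws) *m b in hn *.
  have hpg : pos (- g') by rewrite posroot_opp.
  have hd := dom_form (proj2 (posrootP _ hpg)) ah_dom.
  rewrite formNl form_sym oppr_ge0 in hd.
  rewrite lt_neqAle hd andbT; apply/negP => /eqP h0.
  have hI : posroot_I G Phi ah (- g') by apply: support_I; rewrite // formNr h0 oppr0.
  have := hX _ hI; rewrite mulmxN /g' word_inv' posroot_opp => hnb.
  by move: (pos_not_neg hb); rewrite hnb.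
have e : W (rev ws) = W gs by apply: determination => b hb; rewrite px // pz.
have e' : W ws = W (rev gs) by rewrite -(revK ws); apply: word_inv_uniq.
by rewrite e'.
Qed.

Lemma main_all :
  (forall a b x, longroot G Phi a -> longroot G Phi b ->
     inW G Phi x -> x *m b = a ->
     `|level G Phi ah a - level G Phi ah b| <= (lengthW G x)%:R) /\
  (forall a b, longroot G Phi a -> longroot G Phi b ->
     ((exists x, is_xab G Phi ah a b x) <->
        ((exists gs, spath G Phi ah b gs a) \/ (exists gs, spath G Phi ah a gs b))) /\
     (forall x y, is_xab G Phi ah a b x -> is_xab G Phi ah a b y -> x = y) /\
     (forall x, is_xab G Phi ah a b x -> (exists gs, spath G Phi ah b gs a) ->
        forall gs, spath G Phi ah b gs a <-> reduced_expr G x (rev gs))) /\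
  (forall a b c x1 x2, longroot G Phi a -> longroot G Phi b -> longroot G Phi c ->
     le_root a b -> le_root b c ->
     is_xab G Phi ah a b x1 -> is_xab G Phi ah b c x2 ->
     is_xab G Phi ah a c (x1 *m x2) /\
     lengthW G (x1 *m x2) = (lengthW G x1 + lengthW G x2)%N) /\
  (forall a, longroot G Phi a -> posroot Phi a -> is_xab G Phi ah (- a) a (refl G a)) /\
  (forall a, longroot G Phi a ->
     (exists x, inX G Phi ah x /\ x *m ah = a /\ is_xab G Phi ah a ah x) /\
     (forall x, inX G Phi ah x -> x *m ah = a -> is_xab G Phi ah a ah x)).
Proof.
split; first by move=> a b x ha hb hx e; apply: part_a.
split.
  move=> a b ha hb; split; first exact: part_b1.
  split; first by move=> x y; apply: xab_unique.
  by move=> x hx hp gs; apply: part_b3.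
split.
  by move=> a b c x1 x2 ha hb hc hab hbc h1 h2; apply: (part_c ha hb hc hab hbc h1 h2).
split; first by move=> a ha hp; apply: part_d.
exact: part_e.
Qed.

End Main3.
End M4.
Import M4.

Theorem proposition1p12 (R : realFieldType) (n : nat) (G : 'M[R]_n)
  (Phi : seq 'cV[R]_n) (ah : 'cV[R]_n) :
  is_irr_reduced_root_system_with_basis G Phi ->
  min_sqlen_one G Phi ->
  is_highest_root Phi ah ->
  (* (a) *)
  (forall a b x, longroot G Phi a -> longroot G Phi b ->
     inW G Phi x -> x *m b = a ->
     `|level G Phi ah a - level G Phi ah b| <= (lengthW G x)%:R) /\
  (* (b) *)
  (forall a b, longroot G Phi a -> longroot G Phi b ->
     ((exists x, is_xab G Phi ah a b x) <->
        ((exists gs, spath G Phi ah b gs a) \/ (exists gs, spath G Phi ah a gs b))) /\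
     (forall x y, is_xab G Phi ah a b x -> is_xab G Phi ah a b y -> x = y) /\
     (forall x, is_xab G Phi ah a b x -> (exists gs, spath G Phi ah b gs a) ->
        forall gs, spath G Phi ah b gs a <-> reduced_expr G x (rev gs))) /\
  (* (c) *)
  (forall a b c x1 x2, longroot G Phi a -> longroot G Phi b -> longroot G Phi c ->
     le_root a b -> le_root b c ->
     is_xab G Phi ah a b x1 -> is_xab G Phi ah b c x2 ->
     is_xab G Phi ah a c (x1 *m x2) /\
     lengthW G (x1 *m x2) = (lengthW G x1 + lengthW G x2)%N) /\
  (* (d) *)
  (forall a, longroot G Phi a -> posroot Phi a -> is_xab G Phi ah (- a) a (refl G a)) /\
  (* (e) *)
  (forall a, longroot G Phi a ->
     (exists x, inX G Phi ah x /\ x *m ah = a /\ is_xab G Phi ah a ah x) /\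
     (forall x, inX G Phi ah x -> x *m ah = a -> is_xab G Phi ah a ah x)).
Proof.
move=> HRS Hmin Hhi.
exact: (@main_all R n G Phi HRS Hmin ah Hhi).
Qed.
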